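(* In the setting below, for any parameters $\epsilon_1,\epsilon_2,\epsilon_3>0$, $0<\theta_l<\theta_u$, $\rho^0>0$, $\sigma>1$ and $y^0\in\Upsilon_\tau$, the termination condition in step (ii) of Algorithm PDC is satisfied after finitely many iterations.
   Context: Setting. $\mathcal A$ is a finite set of links; $\mathcal V=\{\Delta h: h\ge0,\ \Lambda h=d\}\subset\mathbb R^{|\mathcal A|}$, where $\Delta$ is a 0/1 link–route incidence matrix, $\Lambda$ a 0/1 OD–route incidence matrix in which every route belongs to exactly one OD pair and every OD pair has at least one route, and $d>0$ (so $\mathcal V$ is a nonempty compact convex polytope in $\mathbb R^{|\mathcal A|}_{\ge0}$). Let $u_a\ge0$, $\mathcal Y=\{y: 0\le y_a\le u_a\ \forall a\}$, $1\le\tau\le|\mathcal A|$, $\Upsilon_\tau=\{y\in\mathcal Y: |\{a: y_a>0\}|\le\tau\}$. Standing assumptions: each $t_a(y_a,v_a)$ is continuously differentiable and strictly increasing in $v_a$ for $y_a\ge0$; each $G_a$ is nonnegative, continuously differentiable, strictly increasing, convex; $\int_0^{v_a}t_a(y_a,w)dw$ and $t_a(y_a,v_a)v_a$ are convex in $(y_a,v_a)$. With $\eta>0$: $F(y,v)=\sum_a t_a(y_a,v_a)v_a+\eta\sum_aG_a(y_a)$, $f(y,v)=\sum_a\int_0^{v_a}t_a(y_a,w)dw$, $g(y)=\min_{v\in\mathcal V}f(y,v)$, $\varphi(y,v)=f(y,v)-g(y)$. $\mathcal V^*(y)$ is the set of $v\in\mathcal V$ with $\langle t(y,v),v'-v\rangle\ge0$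 for all $v'\in\mathcal V$; it is a singleton equal to $\arg\min_{v\in\mathcal V}f(y,v)$. Known fact: $g$ is convex and continuously differentiable on $\mathcal Y$. Define $\Phi(y,v;\bar y,\bar v)=f(y,v)-g(\bar y)-\nabla g(\bar y)^{\mathsf T}(y-\bar y)$ and, for given $\rho^k,\beta^k>0$ and $(y^k,v^k)$, $\Psi^k(y,v)=F(y,v)+\rho^k\Phi(y,v;y^k,v^k)+\rho^k\beta^k\|(y-y^k,v-v^k)\|_2^2$. Algorithm AMA with inputs $(\rho^k,\beta^k,y^k,v^k;y^{k,0})$: for $j=0,1,\dots$: $v^{k,j+1}$ = unique minimizer of $\Psi^k(y^{k,j},\cdot)$ over $\mathcal V$; $y^{k,j+1}$ = a minimizer of $\Psi^k(\cdot,v^{k,j+1})$ over $\Upsilon_\tau$; stop if $(y^{k,j+1},v^{k,j+1})$ is partially optimal (i.e. $\Psi^k(y^{k,j+1},v^{k,j+1})\le\Psi^k(y^{k,j+1},v)\ \forall v\in\mathcal V$ and $\le\Psi^k(y,v^{k,j+1})\ \forall y\in\Upsilon_\tau$). $\mathrm{AMA}(\cdot)$ denotes the returned point if it stops, otherwise any accumulation point of its iterates. Algorithm PDC with parameters $\epsilon_1,\epsilon_2,\epsilon_3>0$, $0<\theta_l<\theta_u$, $\rho^0>0$, $\sigma>1$, $y^0\in\Upsilon_\tau$: set $v^0\in\mathcal V^*(y^0)$ and choose $\beta^0\in[\theta_l/\rho^0,\theta_u/\rho^0]$; for $k=0,1,\dots$: (i) $(y^{k+1},v^{k+1})=\mathrm{AMA}(\rho^k,\beta^k,y^k,v^k;y^k)$;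 (ii) if $\|y^{k+1}-y^k\|_2\le\epsilon_1$, $\|v^{k+1}-v^k\|_2\le\epsilon_2$ and $\Phi(y^{k+1},v^{k+1};y^k,v^k)\le\epsilon_3$, stop and return $(y^{k+1},v^{k+1})$; (iii) set $\rho^{k+1}=\sigma\rho^k$ if $\Phi(y^{k+1},v^{k+1};y^k,v^k)>\epsilon_3$, else $\rho^{k+1}=\rho^k$; (iv) choose $\beta^{k+1}\in[\theta_l/\rho^{k+1},\theta_u/\rho^{k+1}]$. *)

(* Defs.v *)
From Stdlib Require Import Reals.
From Coquelicot Require Import Coquelicot.
Open Scope R_scope.

(** Vectors indexed by natural numbers; only indices below the relevant
    dimension are ever inspected. *)
Definition vec := nat -> R.

Fixpoint sumR (n : nat) (f : nat -> R) : R :=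
  match n with O => 0 | S k => sumR k f + f k end.

Fixpoint countpos (n : nat) (y : vec) : nat :=
  match n with
  | O => O
  | S k => (countpos k y + (if Rlt_dec 0 (y k) then 1 else 0))%nat
  end.

(** Links are 0..nL-1, routes 0..nR-1, OD pairs 0..nW-1.
    Delta a r = true iff link a lies on route r (0/1 link-route incidence);
    Lambda w r = true iff route r belongs to OD pair w (0/1 OD-route incidence). *)
Record instance := {
  nL : nat; nR : nat; nW : nat;
  Delta : nat -> nat -> bool;
  Lambda : nat -> nat -> bool;
  dem : vec;                 (* d, indexed by OD pairs *)
  cap : vec;                 (* u, indexed by links *)
  tau : nat;
  tt : nat -> R -> R -> R;   (* tt a y v = t_a(y_a, v_a) *)
  GG : nat -> R -> R;
  eta : R
}.

(** (M h)_i for a 0/1 matrix M with nR columns *)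
Definition incid (n : nat) (M : nat -> nat -> bool) (h : vec) (i : nat) : R :=
  sumR n (fun r => if M i r then h r else 0).

Definition Vset (P : instance) (v : vec) : Prop :=
  exists h : vec,
    (forall r, (r < nR P)%nat -> 0 <= h r) /\
    (forall w, (w < nW P)%nat -> incid (nR P) (Lambda P) h w = dem P w) /\
    (forall a, (a < nL P)%nat -> v a = incid (nR P) (Delta P) h a).

Definition Yset (P : instance) (y : vec) : Prop :=
  forall a, (a < nL P)%nat -> 0 <= y a <= cap P a.

Definition Ups (P : instance) (y : vec) : Prop :=
  Yset P y /\ (countpos (nL P) y <= tau P)%nat.

Definition C1_1d (h : R -> R) : Prop :=
  forall x, ex_derive h x /\ continuous (Derive h) x.

Definition C1_2d (h : R -> R -> R) : Prop :=
  forall y v,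
    ex_derive (fun s => h s v) y /\ ex_derive (fun s => h y s) v /\
    continuity_2d_pt (fun y' v' => Derive (fun s => h s v') y') y v /\
    continuity_2d_pt (fun y' v' => Derive (fun s => h y' s) v') y v.

Definition convex_on (D : R -> Prop) (h : R -> R) : Prop :=
  forall x1 x2 l, D x1 -> D x2 -> 0 <= l <= 1 ->
    h (l * x1 + (1 - l) * x2) <= l * h x1 + (1 - l) * h x2.

Definition convex_on2 (D : R -> R -> Prop) (h : R -> R -> R) : Prop :=
  forall y1 v1 y2 v2 l, D y1 v1 -> D y2 v2 -> 0 <= l <= 1 ->
    h (l * y1 + (1 - l) * y2) (l * v1 + (1 - l) * v2)
      <= l * h y1 v1 + (1 - l) * h y2 v2.

Definition quadrant (y v : R) : Prop := 0 <= y /\ 0 <= v.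

Definition standing_assumptions (P : instance) : Prop :=
  (forall r, (r < nR P)%nat ->
     exists w, (w < nW P)%nat /\ Lambda P w r = true /\
       (forall w', (w' < nW P)%nat -> Lambda P w' r = true -> w' = w)) /\
  (forall w, (w < nW P)%nat -> exists r, (r < nR P)%nat /\ Lambda P w r = true) /\
  (forall w, (w < nW P)%nat -> 0 < dem P w) /\
  (forall a, (a < nL P)%nat -> 0 <= cap P a) /\
  (1 <= tau P <= nL P)%nat /\
  0 < eta P /\
  (forall a, (a < nL P)%nat ->
     C1_2d (tt P a) /\
     (forall y v1 v2, 0 <= y -> 0 <= v1 -> v1 < v2 -> tt P a y v1 < tt P a y v2) /\
     convex_on2 quadrant (fun y v => RInt (fun w => tt P a y w) 0 v) /\
     convex_on2 quadrant (fun y v => tt P a y v * v) /\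
     (forall y, 0 <= y -> 0 <= GG P a y) /\
     C1_1d (GG P a) /\
     (forall y1 y2, 0 <= y1 -> y1 < y2 -> GG P a y1 < GG P a y2) /\
     convex_on (fun y => 0 <= y) (GG P a)).

Definition Fobj (P : instance) (y v : vec) : R :=
  sumR (nL P) (fun a => tt P a (y a) (v a) * v a)
  + eta P * sumR (nL P) (fun a => GG P a (y a)).

Definition fobj (P : instance) (y v : vec) : R :=
  sumR (nL P) (fun a => RInt (fun w => tt P a (y a) w) 0 (v a)).

(** g(y) = min_{v in V} f(y,v) (the infimum, which is attained) *)
Definition gval (P : instance) (y : vec) : R :=
  real (Glb_Rbar (fun r => exists v, Vset P v /\ r = fobj P y v)).

Definition gradg (P : instance) (ybar : vec) (a : nat) : R :=
  Derive (fun s => gval P (fun b => if Nat.eqb b a then ybar b + s else ybar b)) 0.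

Definition Phi (P : instance) (y v ybar vbar : vec) : R :=
  fobj P y v - gval P ybar - sumR (nL P) (fun a => gradg P ybar a * (y a - ybar a)).

Definition sqdist (n : nat) (x x' : vec) : R := sumR n (fun a => (x a - x' a) ^ 2).

Definition norm2 (n : nat) (x x' : vec) : R := sqrt (sqdist n x x').

(** Psi^k(y,v) with rho^k = rho, beta^k = beta, (y^k,v^k) = (yk,vk) *)
Definition Psi (P : instance) (rho beta : R) (yk vk : vec) (y v : vec) : R :=
  Fobj P y v + rho * Phi P y v yk vk
  + rho * beta * (sqdist (nL P) y yk + sqdist (nL P) v vk).

Definition Vstar (P : instance) (y v : vec) : Prop :=
  Vset P v /\
  forall v', Vset P v' -> 0 <= sumR (nL P) (fun a => tt P a (y a) (v a) * (v' a - v a)).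

Definition partial_opt (P : instance) (rho beta : R) (yk vk : vec) (y v : vec) : Prop :=
  (forall v', Vset P v' -> Psi P rho beta yk vk y v <= Psi P rho beta yk vk y v') /\
  (forall y', Ups P y' -> Psi P rho beta yk vk y v <= Psi P rho beta yk vk y' v).

(** (yo,vo) is a possible value of AMA(rho,beta,yk,vk; y0): there is a run of
    AMA (iterates Y j = y^{k,j}, Vs j = v^{k,j}, j >= 1 for Vs) such that either
    it stops at the first partially optimal iterate and returns it, or it never
    stops and (yo,vo) is an accumulation point of its iterates. *)
Definition AMA_out (P : instance) (rho beta : R) (yk vk y0 : vec) (yo vo : vec) : Prop :=
  exists (Y Vs : nat -> vec),
    Y O = y0 /\
    (forall j,
       (forall i, (i < j)%nat -> ~ partial_opt P rho beta yk vk (Y (S i)) (Vs (S i))) ->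
       (Vset P (Vs (S j)) /\
        forall v', Vset P v' ->
          Psi P rho beta yk vk (Y j) (Vs (S j)) <= Psi P rho beta yk vk (Y j) v') /\
       (Ups P (Y (S j)) /\
        forall y', Ups P y' ->
          Psi P rho beta yk vk (Y (S j)) (Vs (S j)) <= Psi P rho beta yk vk y' (Vs (S j)))) /\
    ((exists j,
        (forall i, (i < j)%nat -> ~ partial_opt P rho beta yk vk (Y (S i)) (Vs (S i))) /\
        partial_opt P rho beta yk vk (Y (S j)) (Vs (S j)) /\
        yo = Y (S j) /\ vo = Vs (S j)) \/
     ((forall j, ~ partial_opt P rho beta yk vk (Y (S j)) (Vs (S j))) /\
      (forall eps, 0 < eps -> forall N, exists j, (N <= j)%nat /\
         sqdist (nL P) (Y j) yo + sqdist (nL P) (Vs j) vo < eps))).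

Definition PDC_stop (P : instance) (eps1 eps2 eps3 : R) (ys vs : nat -> vec) (k : nat) : Prop :=
  norm2 (nL P) (ys (S k)) (ys k) <= eps1 /\
  norm2 (nL P) (vs (S k)) (vs k) <= eps2 /\
  Phi P (ys (S k)) (vs (S k)) (ys k) (vs k) <= eps3.

(** (ys, vs, rho, beta) is a run of PDC (up to its termination, if any). *)
Definition PDC_run (P : instance) (eps1 eps2 eps3 thl thu rho0 sigma : R) (y0 : vec)
    (ys vs : nat -> vec) (rho beta : nat -> R) : Prop :=
  ys O = y0 /\
  Vstar P y0 (vs O) /\
  rho O = rho0 /\
  thl / rho0 <= beta O <= thu / rho0 /\
  (forall k, (forall i, (i < k)%nat -> ~ PDC_stop P eps1 eps2 eps3 ys vs i) ->
     AMA_out P (rho k) (beta k) (ys k) (vs k) (ys k) (ys (S k)) (vs (S k))) /\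
  (forall k, (forall i, (i <= k)%nat -> ~ PDC_stop P eps1 eps2 eps3 ys vs i) ->
     rho (S k) = (if Rlt_dec eps3 (Phi P (ys (S k)) (vs (S k)) (ys k) (vs k))
                  then sigma * rho k else rho k) /\
     thl / rho (S k) <= beta (S k) <= thu / rho (S k)).

(* Main.v *)
Require Import Defs.
From Stdlib Require Import Reals.
From Coquelicot Require Import Coquelicot.
From Stdlib Require Import Lra Lia Psatz Classical ClassicalEpsilon.
Open Scope R_scope.

Lemma sumR_ext n f g : (forall a, (a < n)%nat -> f a = g a) -> sumR n f = sumR n g.
Proof. induction n; simpl; intros H; [reflexivity|]. rewrite IHn by (intros; apply H; lia). rewrite H by lia. reflexivity. Qed.

Lemma sumR_plus n f g : sumR n (fun a => f a + g a) = sumR n f + sumR n g.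
Proof. induction n; simpl; [lra|]. rewrite IHn. lra. Qed.

Lemma sumR_minus n f g : sumR n (fun a => f a - g a) = sumR n f - sumR n g.
Proof. induction n; simpl; [lra|]. rewrite IHn. lra. Qed.

Lemma sumR_scal n c f : sumR n (fun a => c * f a) = c * sumR n f.
Proof. induction n; simpl; [lra|]. rewrite IHn. lra. Qed.

Lemma sumR_le n f g : (forall a, (a < n)%nat -> f a <= g a) -> sumR n f <= sumR n g.
Proof. induction n; simpl; intros H; [lra|]. assert (H1 := H n (Nat.lt_succ_diag_r n)).
  assert (sumR n f <= sumR n g) by (apply IHn; intros; apply H; lia). lra. Qed.

Lemma sumR_le_strict n f g a k : (forall b, (b < n)%nat -> f b <= g b) -> (a < n)%nat ->
  f a <= g a - k -> sumR n f <= sumR n g - k.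
Proof. induction n; simpl; intros H Ha Hk; [lia|].
  destruct (Nat.eq_dec a n) as [->|Hne].
  - assert (sumR n f <= sumR n g) by (apply sumR_le; intros; apply H; lia). lra.
  - assert (sumR n f <= sumR n g - k) by (apply IHn; [intros; apply H; lia|lia|auto]).
    assert (f n <= g n) by (apply H; lia). lra. Qed.

Lemma sumR_abs n f : Rabs (sumR n f) <= sumR n (fun a => Rabs (f a)).
Proof. induction n; simpl. rewrite Rabs_R0; lra.
  eapply Rle_trans; [apply Rabs_triang|]. lra. Qed.

Lemma sumR_nonneg n f : (forall a, (a < n)%nat -> 0 <= f a) -> 0 <= sumR n f.
Proof. intros H. replace 0 with (sumR n (fun _ => 0)). apply sumR_le; auto.
  induction n; simpl; auto. rewrite IHn; [lra|]. intros; apply H; lia. Qed.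

Lemma sumR_zero n f : (forall a, (a < n)%nat -> f a = 0) -> sumR n f = 0.
Proof. induction n; simpl; intros H; auto. rewrite IHn, H; try lra; intros; try apply H; lia. Qed.

Lemma term_le_sumR n f a : (forall b, (b < n)%nat -> 0 <= f b) -> (a < n)%nat -> f a <= sumR n f.
Proof. induction n; simpl; intros H Ha; [lia|].
  destruct (Nat.eq_dec a n) as [->|Hne].
  - assert (0 <= sumR n f) by (apply sumR_nonneg; intros; apply H; lia). lra.
  - assert (f a <= sumR n f) by (apply IHn; [intros; apply H; lia|lia]).
    assert (0 <= f n) by (apply H; lia). lra. Qed.

Lemma sumR_indic n g a : (a < n)%nat ->
  sumR n (fun b => g b * (if Nat.eqb b a then 1 else 0)) = g a.
Proof. induction n; simpl; intros Ha; [lia|].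
  destruct (Nat.eq_dec a n) as [->|Hne].
  - rewrite Nat.eqb_refl. rewrite sumR_zero. lra. intros b Hb.
    destruct (Nat.eqb_spec b n); [lia|lra].
  - rewrite IHn by lia. destruct (Nat.eqb_spec n a); [lia|lra]. Qed.

Lemma all_pos n (Pr : nat -> R -> Prop) :
  (forall a, (a < n)%nat -> exists e, 0 < e /\ Pr a e) ->
  (forall a e e', 0 < e' <= e -> Pr a e -> Pr a e') ->
  exists e, 0 < e /\ forall a, (a < n)%nat -> Pr a e.
Proof. intros H Hm. induction n.
  - exists 1; split; [lra|intros; lia].
  - destruct IHn as [e [He Hall]]. intros; apply H; lia.
    destruct (H n (Nat.lt_succ_diag_r n)) as [e1 [He1 H1]].
    exists (Rmin e e1). split. apply Rmin_pos; auto.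
    intros a Ha. destruct (Nat.eq_dec a n) as [->|].
    + apply Hm with e1; auto. split. apply Rmin_pos; auto. apply Rmin_r.
    + apply Hm with e; [split; [apply Rmin_pos; auto|apply Rmin_l]|apply Hall; lia]. Qed.

Lemma all_bound n (Pr : nat -> R -> Prop) :
  (forall a, (a < n)%nat -> exists C, Pr a C) ->
  (forall a C C', C <= C' -> Pr a C -> Pr a C') ->
  exists C, forall a, (a < n)%nat -> Pr a C.
Proof. intros H Hm. induction n.
  - exists 0; intros; lia.
  - destruct IHn as [C Hall]. intros; apply H; lia.
    destruct (H n (Nat.lt_succ_diag_r n)) as [C1 H1].
    exists (Rmax C C1). intros a Ha. destruct (Nat.eq_dec a n) as [->|].
    + apply Hm with C1; auto. apply Rmax_r.
    + apply Hm with C; [apply Rmax_l|apply Hall; lia]. Qed.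

Lemma sqdist_coord n x x' a : (a < n)%nat -> (x a - x' a) ^ 2 <= sqdist n x x'.
Proof. intros Ha. unfold sqdist. apply (term_le_sumR n (fun a => (x a - x' a) ^ 2)).
  intros; cbv beta; apply pow2_ge_0. auto. Qed.

Lemma sqdist_nonneg n x x' : 0 <= sqdist n x x'.
Proof. apply sumR_nonneg. intros; apply pow2_ge_0. Qed.

Lemma sqdist_self n x : sqdist n x x = 0.
Proof. apply sumR_zero. intros; ring. Qed.

Definition Dsum (P : instance) := sumR (nW P) (fun w => Rabs (dem P w)).
Definition Mv (P : instance) := sumR (nR P) (fun _ => Dsum P).

Lemma incid_comb n M h h' l i :
  incid n M (fun r => l * h r + (1 - l) * h' r) i = l * incid n M h i + (1 - l) * incid n M h' i.
Proof. unfold incid. rewrite <- !sumR_scal, <- sumR_plus. apply sumR_ext. intros.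
  destruct (M i a); ring. Qed.

Lemma Vset_convex P v v' l : Vset P v -> Vset P v' -> 0 <= l <= 1 ->
  Vset P (fun a => l * v a + (1 - l) * v' a).
Proof. intros [h [H1 [H2 H3]]] [h' [H1' [H2' H3']]] Hl.
  exists (fun r => l * h r + (1 - l) * h' r). split; [|split].
  - intros r Hr. specialize (H1 r Hr). specialize (H1' r Hr). nra.
  - intros w Hw. rewrite incid_comb, H2, H2' by auto. ring.
  - intros a Ha. rewrite incid_comb, H3, H3' by auto. ring. Qed.

Lemma Vset_bound P v : standing_assumptions P -> Vset P v ->
  forall a, (a < nL P)%nat -> 0 <= v a <= Mv P.
Proof. intros HP [h [H1 [H2 H3]]] a Ha. destruct HP as [Hroute _].
  rewrite H3 by auto. unfold incid. split.
  - apply sumR_nonneg. intros r Hr. destruct (Defs.Delta P a r); [apply H1; auto|lra].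
  - unfold Mv. apply sumR_le. intros r Hr.
    destruct (Hroute r Hr) as [w [Hw [HL _]]].
    assert (h r <= dem P w).
    { rewrite <- (H2 w Hw). unfold incid.
      assert (Ht := term_le_sumR (nR P) (fun r0 => if Lambda P w r0 then h r0 else 0) r).
      cbv beta in Ht. rewrite HL in Ht. apply Ht; auto.
      intros b Hb. destruct (Lambda P w b); [apply H1; auto|lra]. }
    assert (dem P w <= Dsum P).
    { unfold Dsum. eapply Rle_trans; [apply Rle_abs|].
      apply (term_le_sumR (nW P) (fun w => Rabs (dem P w)) w); auto.
      intros; apply Rabs_pos. }
    destruct (Defs.Delta P a r); [lra|]. specialize (H1 r Hr). lra. Qed.

Lemma Mv_nonneg P : 0 <= Mv P.
Proof. unfold Mv. apply sumR_nonneg. intros. unfold Dsum. apply sumR_nonneg. intros; apply Rabs_pos. Qed.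

Lemma cont_pt_intro f x : (forall e, 0 < e -> exists d, 0 < d /\ forall x', Rabs (x' - x) < d -> Rabs (f x' - f x) < e) -> continuity_pt f x.
Proof. intros H e He. destruct (H e He) as [d [Hd Hf]]. exists d; split; auto.
  intros x' [_ Hx']. apply Hf. exact Hx'. Qed.

Lemma cont_pt_elim f x : continuity_pt f x -> forall e, 0 < e -> exists d, 0 < d /\ forall x', Rabs (x' - x) < d -> Rabs (f x' - f x) < e.
Proof. intros H e He. destruct (H e He) as [d [Hd Hf]]. exists d; split; auto.
  intros x' Hx'. destruct (Req_dec x' x) as [->|Hne]. unfold Rminus; rewrite Rplus_opp_r, Rabs_R0; auto.
  apply Hf. split; [split; [exact I|auto]|exact Hx']. Qed.

Lemma cont_pt_continuous f x : continuity_pt f x -> continuous f x.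
Proof. intros H. apply continuity_pt_filterlim. auto. Qed.

Lemma ex_derive_cont_pt f x : ex_derive f x -> continuity_pt f x.
Proof. intros H. apply continuity_pt_filterlim. exact (@ex_derive_continuous R_AbsRing R_NormedModule f x H). Qed.

Lemma cont2d_snd f x y : continuity_2d_pt f x y -> continuity_pt (f x) y.
Proof. intros H. apply cont_pt_intro. intros e He.
  destruct (H (mkposreal e He)) as [d Hd]. exists d. split; [apply cond_pos|].
  intros x' Hx'. apply (Hd x x'). rewrite Rminus_diag_eq, Rabs_R0 by auto. apply cond_pos. auto. Qed.

Lemma cont2d_fst f x y : continuity_2d_pt f x y -> continuity_pt (fun z => f z y) x.
Proof. intros H. apply cont_pt_intro. intros e He.
  destruct (H (mkposreal e He)) as [d Hd]. exists d. split; [apply cond_pos|].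
  intros x' Hx'. apply (Hd x' y). auto. rewrite Rminus_diag_eq, Rabs_R0 by auto. apply cond_pos. Qed.

Lemma cont_bound f a b : a <= b -> (forall u, a <= u <= b -> continuity_pt f u) ->
  exists B, forall u, a <= u <= b -> Rabs (f u) <= B.
Proof. intros Hab Hc. destruct (continuity_ab_maj (fun u => Rabs (f u)) a b Hab) as [m [Hm _]].
  intros c Hc'. apply (continuity_pt_comp f Rabs). auto. apply Rcontinuity_abs.
  exists (Rabs (f m)). auto. Qed.

Lemma RInt_diff (f g : R -> R) a b : ex_RInt f a b -> ex_RInt g a b ->
  RInt f a b - RInt g a b = RInt (fun w => f w - g w) a b.
Proof. intros. rewrite (RInt_minus f). reflexivity. all: auto. Qed.

Lemma RInt_chasles' (f : R -> R) a b c : ex_RInt f a b -> ex_RInt f b c -> RInt f a c = RInt f a b + RInt f b c.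
Proof. intros. rewrite <- (RInt_Chasles f a b c); auto. Qed.

Lemma abs_RInt_le2 (f : R -> R) a b B : ex_RInt f a b -> ex_RInt f b a ->
  (forall u, Rmin a b <= u <= Rmax a b -> Rabs (f u) <= B) ->
  Rabs (RInt f a b) <= Rabs (b - a) * B.
Proof. intros H1 H2 H. destruct (Rle_dec a b) as [Hab|Hab].
  - rewrite (Rabs_pos_eq (b - a)) by lra. apply abs_RInt_le_const; auto.
    intros u Hu. apply H. rewrite Rmin_left, Rmax_right; lra.
  - rewrite <- opp_RInt_swap by auto. change (Rabs (- RInt f b a) <= Rabs (b - a) * B).
    rewrite Rabs_Ropp, (Rabs_left (b - a)) by lra. replace (- (b - a)) with (a - b) by ring.
    apply abs_RInt_le_const; auto. lra. intros u Hu. apply H. rewrite Rmin_right, Rmax_left; lra. Qed.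

Definition cont2 (h : R -> R -> R) (y v : R) := forall e, 0 < e -> exists d, 0 < d /\
  forall y' v', Rabs (y' - y) < d -> Rabs (v' - v) < d -> Rabs (h y' v' - h y v) < e.

Section Link.
Variable t : R -> R -> R.
Hypothesis Ht : C1_2d t.

Definition D1 (y u : R) := Derive (fun s => t s u) y.
Definition phi (y x : R) := RInt (fun w => t y w) 0 x.

Lemma t_cont_v y v : continuity_pt (t y) v.
Proof. apply ex_derive_cont_pt. destruct (Ht y v) as [_ [H _]]. exact H. Qed.

Lemma t_cont_y y u : continuity_pt (fun s => t s u) y.
Proof. apply ex_derive_cont_pt. destruct (Ht y u) as [H _]. exact H. Qed.

Lemma D1_cont_u y u : continuity_pt (D1 y) u.
Proof. destruct (Ht y u) as [_ [_ [H _]]]. apply (cont2d_snd (fun y' v' => Derive (fun s => t s v') y')). exact H. Qed.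

Lemma ex_RInt_t y a b : ex_RInt (t y) a b.
Proof. apply (@ex_RInt_continuous R_CompleteNormedModule). intros; apply cont_pt_continuous, t_cont_v. Qed.

Lemma ex_RInt_D1 y a b : ex_RInt (D1 y) a b.
Proof. apply (@ex_RInt_continuous R_CompleteNormedModule). intros; apply cont_pt_continuous, D1_cont_u. Qed.

Lemma P1 y a b e : 0 < e -> exists d, 0 < d /\ forall s u, Rabs s < d -> a <= u <= b ->
  Rabs (t (y + s) u - t y u - s * D1 y u) <= e * Rabs s.
Proof. intros He.
  destruct (uniform_continuity_2d_1d' D1 a b y) with (eps := mkposreal e He) as [d Hd].
  { intros x Hx. destruct (Ht y x) as [_ [_ [H _]]]. exact H. }
  exists d. split; [apply cond_pos|]. intros s u Hs Hu.
  destruct (MVT_gen (fun z => t z u) y (y + s) (fun z => D1 z u)) as [c [Hc Heq]].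
  { intros x _. apply Derive_correct. destruct (Ht x u) as [H _]. exact H. }
  { intros x _. apply t_cont_y. }
  cbv beta in Heq. rewrite Heq.
  replace (D1 c u * (y + s - y) - s * D1 y u) with (s * (D1 c u - D1 y u)) by ring.
  rewrite Rabs_mult, Rmult_comm. apply Rmult_le_compat_r; [apply Rabs_pos|].
  left. simpl in Hd.
  assert (Hcy : Rabs (c - y) <= Rabs s).
  { unfold Rmin, Rmax in Hc. destruct (Rle_dec y (y+s)); apply Rabs_le_between'; split;
    unfold Rabs; destruct (Rcase_abs s); lra. }
  apply (Hd u y u c); auto.
  - split; apply Rle_trans with y; try lra. destruct d; simpl; lra. destruct d; simpl; lra.
  - apply Rabs_le_between' in Hcy. lra.
  - rewrite Rminus_diag_eq, Rabs_R0 by auto. apply cond_pos. Qed.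

Lemma D1_bound y a b : a <= b -> exists B, forall u, a <= u <= b -> Rabs (D1 y u) <= B.
Proof. intros. apply cont_bound; auto. intros; apply D1_cont_u. Qed.

Lemma t_bound_v y a b : a <= b -> exists B, forall u, a <= u <= b -> Rabs (t y u) <= B.
Proof. intros. apply cont_bound; auto. intros; apply t_cont_v. Qed.

Lemma P1' y a b : a <= b -> exists C d, 0 <= C /\ 0 < d /\ forall s u, Rabs s < d -> a <= u <= b ->
  Rabs (t (y + s) u - t y u) <= C * Rabs s.
Proof. intros Hab. destruct (D1_bound y a b Hab) as [B HB]. destruct (P1 y a b 1) as [d [Hd H]]; [lra|].
  assert (0 <= B) by (specialize (HB a); assert (Ha := Rabs_pos (D1 y a)); enough (Rabs (D1 y a) <= B) by lra; apply HB; lra).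
  exists (B + 1), d. split; [lra|split; auto]. intros s u Hs Hu.
  specialize (H s u Hs Hu). specialize (HB u Hu).
  replace (t (y + s) u - t y u) with ((t (y + s) u - t y u - s * D1 y u) + s * D1 y u) by ring.
  eapply Rle_trans; [apply Rabs_triang|]. rewrite Rabs_mult.
  assert (0 <= Rabs s) by apply Rabs_pos. nra. Qed.

Lemma phi_diff y y' x : phi y' x - phi y x = RInt (fun w => t y' w - t y w) 0 x.
Proof. unfold phi. apply RInt_diff; apply ex_RInt_t. Qed.

Lemma Bphi y M : 0 <= M -> exists C d, 0 <= C /\ 0 < d /\ forall s x, Rabs s < d -> Rabs x <= M ->
  Rabs (phi (y + s) x - phi y x) <= C * Rabs s.
Proof. intros HM. destruct (P1' y (-M) M) as [C [d [HC [Hd H]]]]; [lra|].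
  exists (M * C), d. split; [nra|split; auto]. intros s x Hs Hx.
  rewrite phi_diff. eapply Rle_trans. apply abs_RInt_le2 with (B := C * Rabs s).
  apply (@ex_RInt_minus R_NormedModule); apply ex_RInt_t.
  apply (@ex_RInt_minus R_NormedModule); apply ex_RInt_t.
  intros u Hu. apply H; auto. apply Rabs_le_between in Hx.
  split. apply Rle_trans with (Rmin 0 x); [apply Rmin_glb; lra|lra].
  apply Rle_trans with (Rmax 0 x); [lra|apply Rmax_lub; lra].
  rewrite Rminus_0_r. assert (0 <= Rabs s) by apply Rabs_pos.
  assert (0 <= C * Rabs s) by nra. nra. Qed.

Lemma Ephi y M L e : 0 <= L <= M -> 0 < e -> exists d, 0 < d /\ forall s x, Rabs s < d -> 0 <= x <= M ->
  Rabs (x - L) < d ->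
  Rabs (phi (y + s) x - phi y x - s * RInt (D1 y) 0 L) <= e * Rabs s.
Proof. intros HL He. destruct (D1_bound y 0 M) as [B HB]; [lra|].
  assert (0 <= B) by (specialize (HB 0); assert (Ha := Rabs_pos (D1 y 0)); enough (Rabs (D1 y 0) <= B) by lra; apply HB; lra).
  destruct (P1 y 0 M (e / (2 * (M + 1)))) as [d1 [Hd1 H1]].
  { apply Rdiv_lt_0_compat; lra. }
  exists (Rmin d1 (e / (2 * (B + 1)))). split. apply Rmin_pos; auto. apply Rdiv_lt_0_compat; lra.
  intros s x Hs Hx HxL.
  assert (Hs1 : Rabs s < d1) by (eapply Rlt_le_trans; [apply Hs|apply Rmin_l]).
  assert (HxL2 : Rabs (x - L) < e / (2 * (B + 1))) by (eapply Rlt_le_trans; [apply HxL|apply Rmin_r]).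
  rewrite phi_diff.
  rewrite (RInt_chasles' (D1 y) 0 x L) by apply ex_RInt_D1.
  assert (E1 : RInt (fun w => t (y + s) w - t y w) 0 x - s * RInt (D1 y) 0 x
             = RInt (fun w => t (y + s) w - t y w - s * D1 y w) 0 x).
  { assert (Hsc : RInt (fun w => s * D1 y w) 0 x = s * RInt (D1 y) 0 x)
      by exact (RInt_scal (D1 y) 0 x s (ex_RInt_D1 y 0 x)).
    rewrite <- Hsc. apply RInt_diff. apply (@ex_RInt_minus R_NormedModule); apply ex_RInt_t.
    apply (@ex_RInt_scal R_NormedModule). apply ex_RInt_D1. }
  replace (RInt (fun w => t (y + s) w - t y w) 0 x - s * (RInt (D1 y) 0 x + RInt (D1 y) x L))
    with ((RInt (fun w => t (y + s) w - t y w) 0 x - s * RInt (D1 y) 0 x) - s * RInt (D1 y) x L) by ring.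
  rewrite E1. eapply Rle_trans; [apply Rabs_triang|]. rewrite Rabs_Ropp, Rabs_mult.
  assert (A1 : Rabs (RInt (fun w => t (y + s) w - t y w - s * D1 y w) 0 x) <= x * (e / (2 * (M + 1)) * Rabs s)).
  { rewrite <- (Rminus_0_r x) at 2. apply abs_RInt_le_const. lra.
    apply (@ex_RInt_minus R_NormedModule). apply (@ex_RInt_minus R_NormedModule); apply ex_RInt_t.
    apply (@ex_RInt_scal R_NormedModule). apply ex_RInt_D1.
    intros u Hu. apply H1; auto. lra. }
  assert (A2 : Rabs (RInt (D1 y) x L) <= Rabs (L - x) * B).
  { apply abs_RInt_le2; try apply ex_RInt_D1. intros u Hu. apply HB.
    split. apply Rle_trans with (Rmin x L); [apply Rmin_glb; lra|lra].
    apply Rle_trans with (Rmax x L); [lra|apply Rmax_lub; lra]. }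
  rewrite Rabs_minus_sym in A2.
  assert (0 <= Rabs s) by apply Rabs_pos. assert (0 <= Rabs (x - L)) by apply Rabs_pos.
  assert (A3 : x * (e / (2 * (M + 1)) * Rabs s) <= e / 2 * Rabs s).
  { replace (x * (e / (2 * (M + 1)) * Rabs s)) with ((x / (M + 1)) * (e / 2 * Rabs s)) by (field; lra).
    assert (x / (M + 1) <= 1). { apply Rmult_le_reg_r with (M + 1). lra. field_simplify; lra. }
    assert (0 <= e / 2 * Rabs s) by nra. nra. }
  assert (A4 : Rabs (x - L) * B <= e / 2).
  { apply Rle_trans with (e / (2 * (B + 1)) * B). apply Rmult_le_compat_r; lra.
    apply Rmult_le_reg_r with (2 * (B + 1)). lra. field_simplify; nra. }
  assert (Rabs s * (Rabs (x - L) * B) <= Rabs s * (e / 2)) by (apply Rmult_le_compat_l; auto).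
  nra. Qed.
End Link.

Lemma RInt_const_R a b c : RInt (fun _ => c) a b = (b - a) * c.
Proof. rewrite RInt_const. reflexivity. Qed.

Lemma RInt_ge_const (f : R -> R) a b c : a <= b -> ex_RInt f a b -> (forall w, a < w < b -> c <= f w) -> (b - a) * c <= RInt f a b.
Proof. intros. rewrite <- RInt_const_R. apply RInt_le; auto. apply ex_RInt_const. Qed.

Lemma RInt_le_const (f : R -> R) a b c : a <= b -> ex_RInt f a b -> (forall w, a < w < b -> f w <= c) -> RInt f a b <= (b - a) * c.
Proof. intros. rewrite <- RInt_const_R. apply RInt_le; auto. apply ex_RInt_const. Qed.

Section Link2.
Variable t : R -> R -> R.
Hypothesis Ht : C1_2d t.

Lemma phi_bound y M : 0 <= M -> exists C, forall x, Rabs x <= M -> Rabs (phi t y x) <= C.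
Proof. intros HM. destruct (t_bound_v t Ht y (-M) M) as [T HT]; [lra|].
  assert (0 <= T) by (specialize (HT 0); assert (Ha := Rabs_pos (t y 0)); enough (Rabs (t y 0) <= T) by lra; apply HT; lra).
  exists (M * T). intros x Hx. unfold phi. eapply Rle_trans. apply abs_RInt_le2 with (B := T); try apply (ex_RInt_t t Ht); auto.
  intros u Hu. apply HT. apply Rabs_le_between in Hx.
  split. apply Rle_trans with (Rmin 0 x); [apply Rmin_glb; lra|lra].
  apply Rle_trans with (Rmax 0 x); [lra|apply Rmax_lub; lra].
  rewrite Rminus_0_r. apply Rmult_le_compat_r; auto. Qed.

Lemma phi_cont2 y v : cont2 (phi t) y v.
Proof. intros e He.
  assert (Hp := Rabs_pos v).
  destruct (Bphi t Ht y (Rabs v + 1)) as [C [d1 [HC [Hd1 H1]]]]; [lra|].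
  destruct (t_bound_v t Ht y (v - 1) (v + 1)) as [T HT]; [lra|].
  assert (0 <= T) by (specialize (HT v); assert (Ha := Rabs_pos (t y v)); enough (Rabs (t y v) <= T) by lra; apply HT; lra).
  exists (Rmin (Rmin d1 1) (Rmin (e / (2 * (C + 1))) (e / (2 * (T + 1))))).
  assert (0 < e / (2 * (C + 1))) by (apply Rdiv_lt_0_compat; lra).
  assert (0 < e / (2 * (T + 1))) by (apply Rdiv_lt_0_compat; lra).
  split. repeat apply Rmin_pos; auto; lra.
  intros y' v' Hy Hv.
  assert (Hy1 : Rabs (y' - y) < d1) by (eapply Rlt_le_trans; [apply Hy|]; apply Rle_trans with (Rmin d1 1); apply Rmin_l).
  assert (Hv1 : Rabs (v' - v) < 1) by (eapply Rlt_le_trans; [apply Hv|]; apply Rle_trans with (Rmin d1 1); [apply Rmin_l|apply Rmin_r]).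
  assert (Hy2 : Rabs (y' - y) < e / (2 * (C + 1))) by (eapply Rlt_le_trans; [apply Hy|]; apply Rle_trans with (Rmin (e / (2 * (C + 1))) (e / (2 * (T + 1)))); [apply Rmin_r|apply Rmin_l]).
  assert (Hv2 : Rabs (v' - v) < e / (2 * (T + 1))) by (eapply Rlt_le_trans; [apply Hv|]; apply Rle_trans with (Rmin (e / (2 * (C + 1))) (e / (2 * (T + 1)))); apply Rmin_r).
  replace (phi t y' v' - phi t y v) with ((phi t (y + (y' - y)) v' - phi t y v') + (phi t y v' - phi t y v)) by (replace (y + (y' - y)) with y' by ring; ring).
  eapply Rle_lt_trans; [apply Rabs_triang|].
  assert (A1 : Rabs (phi t (y + (y' - y)) v' - phi t y v') <= C * Rabs (y' - y)).
  { apply H1; auto. replace v' with ((v' - v) + v) by ring.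
    eapply Rle_trans; [apply Rabs_triang|]. lra. }
  assert (A2 : Rabs (phi t y v' - phi t y v) <= Rabs (v' - v) * T).
  { unfold phi. change (fun w => t y w) with (t y). rewrite (RInt_chasles' (t y) 0 v v') by apply (ex_RInt_t t Ht).
    rewrite (Rplus_comm (RInt (t y) 0 v)). unfold Rminus. rewrite Rplus_assoc, Rplus_opp_r, Rplus_0_r.
    apply abs_RInt_le2; try apply (ex_RInt_t t Ht). intros u Hu. apply HT. apply Rabs_lt_between' in Hv1.
    split. apply Rle_trans with (Rmin v v'); [apply Rmin_glb; lra|lra].
    apply Rle_trans with (Rmax v v'); [lra|apply Rmax_lub; lra]. }
  assert (A3 : C * Rabs (y' - y) < e / 2).
  { apply Rle_lt_trans with (C * (e / (2 * (C + 1)))). apply Rmult_le_compat_l; lra.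
    apply Rmult_lt_reg_r with (2 * (C + 1)). lra. field_simplify; nra. }
  assert (A4 : Rabs (v' - v) * T < e / 2 + 0).
  { apply Rle_lt_trans with (e / (2 * (T + 1)) * T). apply Rmult_le_compat_r; lra.
    apply Rmult_lt_reg_r with (2 * (T + 1)). lra. field_simplify; nra. }
  lra. Qed.

Lemma t_cont2 y v : cont2 t y v.
Proof. intros e He.
  destruct (P1' t Ht y (v - 1) (v + 1)) as [C [d1 [HC [Hd1 H1]]]]; [lra|].
  destruct (cont_pt_elim (t y) v (t_cont_v t Ht y v) (e / 2)) as [d2 [Hd2 H2]]; [lra|].
  exists (Rmin (Rmin d1 1) (Rmin d2 (e / (2 * (C + 1))))).
  assert (0 < e / (2 * (C + 1))) by (apply Rdiv_lt_0_compat; lra).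
  split. repeat apply Rmin_pos; auto; lra.
  intros y' v' Hy Hv.
  assert (Hy1 : Rabs (y' - y) < d1) by (eapply Rlt_le_trans; [apply Hy|]; apply Rle_trans with (Rmin d1 1); apply Rmin_l).
  assert (Hv1 : Rabs (v' - v) < 1) by (eapply Rlt_le_trans; [apply Hv|]; apply Rle_trans with (Rmin d1 1); [apply Rmin_l|apply Rmin_r]).
  assert (Hv2 : Rabs (v' - v) < d2) by (eapply Rlt_le_trans; [apply Hv|]; apply Rle_trans with (Rmin d2 (e / (2 * (C + 1)))); [apply Rmin_r|apply Rmin_l]).
  assert (Hy2 : Rabs (y' - y) < e / (2 * (C + 1))) by (eapply Rlt_le_trans; [apply Hy|]; apply Rle_trans with (Rmin d2 (e / (2 * (C + 1)))); apply Rmin_r).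
  replace (t y' v' - t y v) with ((t (y + (y' - y)) v' - t y v') + (t y v' - t y v)) by (replace (y + (y' - y)) with y' by ring; ring).
  eapply Rle_lt_trans; [apply Rabs_triang|].
  assert (A1 : Rabs (t (y + (y' - y)) v' - t y v') <= C * Rabs (y' - y)).
  { apply H1; auto. apply Rabs_lt_between' in Hv1. lra. }
  assert (A3 : C * Rabs (y' - y) < e / 2).
  { apply Rle_lt_trans with (C * (e / (2 * (C + 1)))). apply Rmult_le_compat_l; lra.
    apply Rmult_lt_reg_r with (2 * (C + 1)). lra. field_simplify; nra. }
  specialize (H2 v' Hv2). lra. Qed.

Hypothesis Hmono : forall y v1 v2, 0 <= y -> 0 <= v1 -> v1 < v2 -> t y v1 < t y v2.

Lemma mono_le y v1 v2 : 0 <= y -> 0 <= v1 -> v1 <= v2 -> t y v1 <= t y v2.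
Proof. intros. destruct (Req_dec v1 v2) as [->|]; [lra|]. left; apply Hmono; lra. Qed.

Lemma t_rect_bound cap M : exists T, forall y v, 0 <= y <= cap -> 0 <= v <= M -> Rabs (t y v) <= T.
Proof. destruct (Rle_dec 0 cap) as [Hc|Hc]; [|exists 0; intros; lra].
  destruct (cont_bound (fun y => t y 0) 0 cap Hc) as [B0 H0]. intros; apply t_cont_y; auto.
  destruct (cont_bound (fun y => t y M) 0 cap Hc) as [B1 H1]. intros; apply t_cont_y; auto.
  exists (Rmax B0 B1). intros y v Hy Hv.
  assert (t y 0 <= t y v) by (apply mono_le; lra). assert (t y v <= t y M) by (apply mono_le; lra).
  specialize (H0 y Hy). specialize (H1 y Hy). apply Rabs_le_between in H0. apply Rabs_le_between in H1.
  assert (B0 <= Rmax B0 B1) by apply Rmax_l. assert (B1 <= Rmax B0 B1) by apply Rmax_r.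
  apply Rabs_le_between. lra. Qed.

Lemma SC_lt y M e : 0 <= y -> 0 < e -> exists k, 0 < k /\ forall x x', 0 <= x -> x' <= M -> x + e <= x' ->
  phi t y ((x + x') / 2) <= (phi t y x + phi t y x') / 2 - k.
Proof. intros Hy He. destruct (Rle_dec 0 M) as [HM|HM]; [|exists 1; split; [lra|intros; lra]].
  destruct (continuity_ab_min (fun m => t y (m + e / 4) - t y m) 0 M HM) as [m0 [Hm0 Hm0r]].
  { intros c Hc. apply continuity_pt_minus. apply (continuity_pt_comp (fun m => m + e / 4) (t y)).
    apply continuity_pt_plus. apply continuity_pt_id. apply continuity_pt_const. intros a b; auto.
    apply t_cont_v; auto. apply t_cont_v; auto. }
  set (mu := t y (m0 + e / 4) - t y m0).
  assert (Hmu : 0 < mu) by (unfold mu; assert (t y m0 < t y (m0 + e / 4)) by (apply Hmono; lra); lra).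
  exists (e * mu / 8). split. apply Rdiv_lt_0_compat; nra.
  intros x x' Hx Hx' Hxx. set (m := (x + x') / 2).
  assert (Hmr : 0 <= m <= M) by (unfold m; lra).
  assert (Hmu2 : mu <= t y (m + e / 4) - t y m) by (apply Hm0; auto).
  unfold phi. change (fun w => t y w) with (t y).
  assert (E1 := RInt_chasles' (t y) 0 x m (ex_RInt_t t Ht y 0 x) (ex_RInt_t t Ht y x m)).
  assert (E2 := RInt_chasles' (t y) 0 m x' (ex_RInt_t t Ht y 0 m) (ex_RInt_t t Ht y m x')).
  assert (E3 := RInt_chasles' (t y) m (m + e / 4) x' (ex_RInt_t t Ht y m (m + e / 4)) (ex_RInt_t t Ht y (m + e / 4) x')).
  assert (I1 : RInt (t y) x m <= (m - x) * t y m).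
  { apply RInt_le_const. unfold m; lra. apply (ex_RInt_t t Ht). intros w Hw. apply mono_le; lra. }
  assert (I2 : (m + e / 4 - m) * t y m <= RInt (t y) m (m + e / 4)).
  { apply RInt_ge_const. lra. apply (ex_RInt_t t Ht). intros w Hw. apply mono_le; lra. }
  assert (I3 : (x' - (m + e / 4)) * t y (m + e / 4) <= RInt (t y) (m + e / 4) x').
  { apply RInt_ge_const. unfold m; lra. apply (ex_RInt_t t Ht). intros w Hw. apply mono_le; lra. }
  assert (Hh : m - x = x' - m) by (unfold m; field).
  assert (Hh2 : e / 4 <= x' - (m + e / 4)) by (unfold m; lra).
  assert (e / 4 * mu <= (x' - (m + e / 4)) * (t y (m + e / 4) - t y m)).
  { apply Rmult_le_compat; lra. }
  clearbody m mu. revert E1 E2 E3 I1 I2 I3.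
  generalize (RInt (t y) 0 x) (RInt (t y) x m) (RInt (t y) 0 m) (RInt (t y) m x') (RInt (t y) 0 x')
    (RInt (t y) m (m + e / 4)) (RInt (t y) (m + e / 4) x').
  intros. rewrite E2, E3, E1. nra. Qed.

Lemma SC y M e : 0 <= y -> 0 < e -> exists k, 0 < k /\ forall x x', 0 <= x <= M -> 0 <= x' <= M -> e <= Rabs (x - x') ->
  phi t y ((x + x') / 2) <= (phi t y x + phi t y x') / 2 - k.
Proof. intros Hy He. destruct (SC_lt y M e Hy He) as [k [Hk H]]. exists k; split; auto.
  intros x x' Hx Hx' Hd. destruct (Rle_dec x x') as [Hle|Hle].
  - rewrite Rabs_left1 in Hd by lra. apply H; lra.
  - rewrite Rabs_pos_eq in Hd by lra. replace ((x + x') / 2) with ((x' + x) / 2) by field.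
    replace ((phi t y x + phi t y x') / 2) with ((phi t y x' + phi t y x) / 2) by field. apply H; lra. Qed.
End Link2.

Definition Boxy (P : instance) (y : vec) := forall a, (a < nL P)%nat -> 0 <= y a <= cap P a.

Lemma hyp_link P : standing_assumptions P -> forall a, (a < nL P)%nat ->
     C1_2d (tt P a) /\
     (forall y v1 v2, 0 <= y -> 0 <= v1 -> v1 < v2 -> tt P a y v1 < tt P a y v2) /\
     convex_on2 quadrant (fun y v => RInt (fun w => tt P a y w) 0 v) /\
     convex_on2 quadrant (fun y v => tt P a y v * v) /\
     (forall y, 0 <= y -> 0 <= GG P a y) /\
     C1_1d (GG P a) /\
     (forall y1 y2, 0 <= y1 -> y1 < y2 -> GG P a y1 < GG P a y2) /\
     convex_on (fun y => 0 <= y) (GG P a).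
Proof. intros HP. destruct HP as [_ [_ [_ [_ [_ [_ H]]]]]]. exact H. Qed.

Lemma glb_facts (E : R -> Prop) : (exists x, E x) -> (exists C, forall x, E x -> C <= x) ->
  (forall x, E x -> real (Glb_Rbar E) <= x) /\ (forall d, 0 < d -> exists x, E x /\ x < real (Glb_Rbar E) + d).
Proof. intros [x0 Hx0] [C HC]. destruct (Glb_Rbar_correct E) as [Hlb Hgl].
  assert (H1 : Rbar_le (Glb_Rbar E) x0) by (apply Hlb; auto).
  assert (H2 : Rbar_le C (Glb_Rbar E)) by (apply Hgl; intros x Hx; simpl; apply HC; auto).
  destruct (Glb_Rbar E) as [g| |] eqn:Hg; simpl in H1, H2; try contradiction. simpl.
  split. intros x Hx. assert (Rbar_le g x) by (apply Hlb; auto). simpl in H; auto.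
  intros d Hd. apply NNPP. intros Hn. assert (Hb : Rbar_le (g + d) g).
  { apply Hgl. intros x Hx. simpl. apply Rnot_lt_le. intros Hlt. apply Hn. exists x; split; auto. }
  simpl in Hb. lra. Qed.

Section Inst.
Variable P : instance.
Hypothesis HP : standing_assumptions P.
Variable v0 : vec.
Hypothesis Hv0 : Vset P v0.
Notation n := (nL P).

Lemma fobj_bound y : exists C, forall v, Vset P v -> Rabs (fobj P y v) <= C.
Proof.
  destruct (all_bound n (fun a C => forall x, Rabs x <= Mv P -> Rabs (phi (tt P a) (y a) x) <= C)) as [C HC].
  { intros a Ha. destruct (hyp_link P HP a Ha) as [Ht _]. apply phi_bound; auto. apply Mv_nonneg. }
  { intros a C C' HCC H x Hx. specialize (H x Hx). lra. }
  exists (sumR n (fun _ => C)). intros v Hv. unfold fobj.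
  eapply Rle_trans; [apply sumR_abs|]. apply sumR_le. intros a Ha. apply HC; auto.
  destruct (Vset_bound P v HP Hv a Ha). rewrite Rabs_pos_eq; lra. Qed.

Lemma gval_props y : (forall v, Vset P v -> gval P y <= fobj P y v) /\
  (forall d, 0 < d -> exists v, Vset P v /\ fobj P y v < gval P y + d).
Proof. destruct (fobj_bound y) as [C HC].
  destruct (glb_facts (fun r => exists v, Vset P v /\ r = fobj P y v)) as [H1 H2].
  exists (fobj P y v0), v0; auto.
  exists (- C). intros x [v [Hv ->]]. specialize (HC v Hv). apply Rabs_le_between in HC. lra.
  split. intros v Hv. apply H1. exists v; auto.
  intros d Hd. destruct (H2 d Hd) as [x [[v [Hv ->]] Hlt]]. exists v; auto. Qed.

Lemma gval_le y v : Vset P v -> gval P y <= fobj P y v.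
Proof. apply gval_props. Qed.
Lemma gval_approx y d : 0 < d -> exists v, Vset P v /\ fobj P y v < gval P y + d.
Proof. apply gval_props. Qed.

Lemma fobj_ext y y' v : (forall b, (b < n)%nat -> y b = y' b) -> fobj P y v = fobj P y' v.
Proof. intros H. unfold fobj. apply sumR_ext. intros a Ha. rewrite H; auto. Qed.

Lemma gval_ext y y' : (forall b, (b < n)%nat -> y b = y' b) -> gval P y = gval P y'.
Proof. intros H. unfold gval. f_equal. apply Glb_Rbar_eqset. intros x. split; intros [v [Hv ->]]; exists v; split; auto.
  apply fobj_ext; auto. symmetry; apply fobj_ext; auto. Qed.

Lemma phi_convex a y y' x x' l : (a < n)%nat -> 0 <= y -> 0 <= y' -> 0 <= x -> 0 <= x' -> 0 <= l <= 1 ->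
  phi (tt P a) (l * y + (1 - l) * y') (l * x + (1 - l) * x') <= l * phi (tt P a) y x + (1 - l) * phi (tt P a) y' x'.
Proof. intros Ha. intros. destruct (hyp_link P HP a Ha) as [_ [_ [Hc _]]]. unfold phi.
  apply (Hc y x y' x' l); unfold quadrant; auto. Qed.

Lemma gval_convex y y' l : Boxy P y -> Boxy P y' -> 0 <= l <= 1 ->
  gval P (fun b => l * y b + (1 - l) * y' b) <= l * gval P y + (1 - l) * gval P y'.
Proof. intros Hy Hy' Hl. apply Rnot_lt_le. intros Hlt.
  set (d := (gval P (fun b => l * y b + (1 - l) * y' b) - (l * gval P y + (1 - l) * gval P y'))).
  assert (Hd : 0 < d) by (unfold d; lra).
  destruct (gval_approx y d Hd) as [v [Hv Hfv]]. destruct (gval_approx y' d Hd) as [v' [Hv' Hfv']].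
  assert (Hw := Vset_convex P v v' l Hv Hv' Hl).
  assert (H1 := gval_le (fun b => l * y b + (1 - l) * y' b) _ Hw).
  assert (H2 : fobj P (fun b => l * y b + (1 - l) * y' b) (fun a => l * v a + (1 - l) * v' a)
               <= l * fobj P y v + (1 - l) * fobj P y' v').
  { unfold fobj. rewrite <- !sumR_scal, <- sumR_plus. apply sumR_le. intros a Ha.
    apply (phi_convex a); auto; try apply Hy; try apply Hy'; auto;
    try apply (Vset_bound P v HP Hv a Ha); try apply (Vset_bound P v' HP Hv' a Ha). }
  assert (l * fobj P y v <= l * (gval P y + d)) by (apply Rmult_le_compat_l; lra).
  assert ((1 - l) * fobj P y' v' <= (1 - l) * (gval P y' + d)) by (apply Rmult_le_compat_l; lra).
  unfold d in *. nra. Qed.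

End Inst.

Lemma inv_small d : 0 < d -> exists N, forall k, (N <= k)%nat -> / (INR k + 1) < d.
Proof. intros Hd. destruct (INR_unbounded (/ d)) as [N HN]. exists N. intros k Hk.
  apply le_INR in Hk. assert (0 < / d) by (apply Rinv_0_lt_compat; auto).
  rewrite <- (Rinv_inv d). apply Rinv_lt_contravar. apply Rmult_lt_0_compat; lra. lra. Qed.

Lemma glim (S : R -> R -> Prop) :
  (forall d, 0 < d -> exists x, S d x) ->
  (forall d d' x, 0 < d <= d' -> S d x -> S d' x) ->
  (forall e, 0 < e -> exists d, 0 < d /\ forall x x', S d x -> S d x' -> Rabs (x - x') < e) ->
  exists L, forall e, 0 < e -> exists d, 0 < d /\ forall x, S d x -> Rabs (x - L) < e.
Proof. intros Hex Hmon Hc.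
  assert (Hpos : forall k, 0 < / (INR k + 1)) by (intros; apply Rinv_0_lt_compat; assert (0 <= INR k) by apply pos_INR; lra).
  set (u := fun k => proj1_sig (constructive_indefinite_description _ (Hex _ (Hpos k)))).
  assert (Hu : forall k, S (/ (INR k + 1)) (u k)) by (intros; unfold u; apply proj2_sig).
  assert (Hcau : Cauchy_crit u).
  { intros e He. destruct (Hc e He) as [d [Hd H]]. destruct (inv_small d Hd) as [N HN].
    exists N. intros p q Hp Hq. unfold Rdist. apply H.
    apply Hmon with (/ (INR p + 1)); auto; split; auto; left; apply HN; lia.
    apply Hmon with (/ (INR q + 1)); auto; split; auto; left; apply HN; lia. }
  destruct (Rcomplete.R_complete u Hcau) as [L HL]. exists L. intros e He.
  destruct (Hc (e / 2)) as [d [Hd H]]; [lra|]. exists d. split; auto. intros x Hx.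
  destruct (inv_small d Hd) as [N1 HN1]. destruct (HL (e / 2)) as [N2 HN2]; [lra|].
  set (k := max N1 N2). specialize (HN2 k ltac:(unfold k; lia)). unfold Rdist in HN2.
  assert (Hk : S d (u k)) by (apply Hmon with (/ (INR k + 1)); auto; split; auto; left; apply HN1; unfold k; lia).
  specialize (H x (u k) Hx Hk).
  replace (x - L) with ((x - u k) + (u k - L)) by ring. eapply Rle_lt_trans; [apply Rabs_triang|]. lra. Qed.

Section Inst2.
Variable P : instance.
Hypothesis HP : standing_assumptions P.
Variable v0 : vec.
Hypothesis Hv0 : Vset P v0.
Notation n := (nL P).
Variable ybar : vec.
Hypothesis Hyb : Boxy P ybar.

Definition NM (d : R) (v : vec) := Vset P v /\ fobj P ybar v < gval P ybar + d.

Lemma Qcauchy a e : (a < n)%nat -> 0 < e -> exists d, 0 < d /\ forall v v', NM d v -> NM d v' -> Rabs (v a - v' a) < e.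
Proof. intros Ha He. destruct (hyp_link P HP a Ha) as [Ht [Hm _]].
  destruct (SC (tt P a) Ht Hm (ybar a) (Mv P) e) as [k [Hk HSC]]; auto. apply Hyb; auto.
  exists k. split; auto. intros v v' [Hv Hfv] [Hv' Hfv']. apply Rnot_le_lt. intros Hge.
  set (w := fun b => (1/2) * v b + (1 - 1/2) * v' b).
  assert (Hw : Vset P w) by (apply Vset_convex; auto; lra).
  assert (H1 := gval_le P HP v0 Hv0 ybar w Hw).
  assert (H2 : fobj P ybar w <= sumR n (fun b => (1/2) * phi (tt P b) (ybar b) (v b) + (1 - 1/2) * phi (tt P b) (ybar b) (v' b)) - k).
  { unfold fobj. apply sumR_le_strict with a; auto.
    - intros b Hb. cbv beta. unfold w.
      assert (Hc := phi_convex P HP b (ybar b) (ybar b) (v b) (v' b) (1/2) Hb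
        (proj1 (Hyb b Hb)) (proj1 (Hyb b Hb)) (proj1 (Vset_bound P v HP Hv b Hb))
        (proj1 (Vset_bound P v' HP Hv' b Hb)) ltac:(lra)).
      replace ((1/2) * ybar b + (1 - 1/2) * ybar b) with (ybar b) in Hc by field. exact Hc.
    - unfold w. replace ((1/2) * v a + (1 - 1/2) * v' a) with ((v a + v' a) / 2) by field.
      replace ((1/2) * phi (tt P a) (ybar a) (v a) + (1 - 1/2) * phi (tt P a) (ybar a) (v' a))
        with ((phi (tt P a) (ybar a) (v a) + phi (tt P a) (ybar a) (v' a)) / 2) by field.
      apply HSC; auto; try apply (Vset_bound P v HP Hv a Ha); try apply (Vset_bound P v' HP Hv' a Ha). }
  rewrite sumR_plus, !sumR_scal in H2. unfold fobj in Hfv, Hfv'. unfold phi in H2. lra. Qed.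

Lemma Lstar_exists a : (a < n)%nat -> exists L, 0 <= L <= Mv P /\
  forall e, 0 < e -> exists d, 0 < d /\ forall v, NM d v -> Rabs (v a - L) < e.
Proof. intros Ha.
  destruct (glim (fun d x => exists v, NM d v /\ x = v a)) as [L HL].
  - intros d Hd. destruct (gval_approx P HP v0 Hv0 ybar d Hd) as [v Hv]. exists (v a), v. split; auto.
  - intros d d' x Hdd [v [[Hv Hf] ->]]. exists v. split; auto. split; auto. lra.
  - intros e He. destruct (Qcauchy a e Ha He) as [d [Hd H]]. exists d. split; auto.
    intros x x' [v [Hv ->]] [v' [Hv' ->]]. auto.
  - exists L. assert (Hcl : forall e, 0 < e -> exists v, Vset P v /\ Rabs (v a - L) < e).
    { intros e He. destruct (HL e He) as [d [Hd H]].
      destruct (gval_approx P HP v0 Hv0 ybar d Hd) as [v [Hv Hf]]. exists v. split; auto.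
      apply H. exists v; split; auto. split; auto. }
    split; [split|].
    + apply Rnot_lt_le. intros Hlt. destruct (Hcl (- L)) as [v [Hv H]]; [lra|].
      destruct (Vset_bound P v HP Hv a Ha). apply Rabs_lt_between' in H. lra.
    + apply Rnot_lt_le. intros Hlt. destruct (Hcl (L - Mv P)) as [v [Hv H]]; [lra|].
      destruct (Vset_bound P v HP Hv a Ha). apply Rabs_lt_between' in H. lra.
    + intros e He. destruct (HL e He) as [d [Hd H]]. exists d. split; auto. intros v Hv. apply H. exists v; auto. Qed.

Definition Lf (a : nat) : R := epsilon (inhabits 0) (fun L => (a < n)%nat -> (0 <= L <= Mv P) /\
  (forall e, 0 < e -> exists d, 0 < d /\ forall v, NM d v -> Rabs (v a - L) < e)).

Lemma Lf_spec a : (a < n)%nat -> 0 <= Lf a <= Mv P /\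
  forall e, 0 < e -> exists d, 0 < d /\ forall v, NM d v -> Rabs (v a - Lf a) < e.
Proof. intros Ha. unfold Lf.
  set (Q := fun L => (a < n)%nat -> (0 <= L <= Mv P) /\ (forall e, 0 < e -> exists d, 0 < d /\ forall v, NM d v -> Rabs (v a - L) < e)).
  assert (HQ : Q (epsilon (inhabits 0) Q)).
  { apply epsilon_spec. destruct (Lstar_exists a Ha) as [L HL]. exists L. intros _. exact HL. }
  apply HQ. exact Ha. Qed.

Definition Dg (a : nat) : R := RInt (D1 (tt P a) (ybar a)) 0 (Lf a).

End Inst2.

Section Inst3.
Variable P : instance.
Hypothesis HP : standing_assumptions P.
Variable v0 : vec.
Hypothesis Hv0 : Vset P v0.
Notation n := (nL P).
Variable ybar : vec.
Hypothesis Hyb : Boxy P ybar.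

Notation NMb := (NM P ybar).
Notation Lb := (Lf P ybar).
Notation Dgb := (Dg P ybar).

Lemma U_Q e : 0 < e -> exists d, 0 < d /\ forall v, NMb d v -> forall a, (a < n)%nat -> Rabs (v a - Lb a) < e.
Proof. intros He.
  assert (H1 : forall a, (a < n)%nat -> exists d, 0 < d /\ (fun a d => forall v, NMb d v -> Rabs (v a - Lb a) < e) a d).
  { intros a Ha. destruct (Lf_spec P HP v0 Hv0 ybar Hyb a Ha) as [_ H]. apply H; auto. }
  assert (H2 : forall a d d', 0 < d' <= d -> (fun a d => forall v, NMb d v -> Rabs (v a - Lb a) < e) a d ->
     (fun a d => forall v, NMb d v -> Rabs (v a - Lb a) < e) a d').
  { intros a d d' Hdd H v [Hv Hf]. apply H. split; [auto|]. lra. }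
  destruct (all_pos n _ H1 H2) as [d [Hd H]].
  exists d. split; [auto|]. intros v Hv a Ha. apply H; auto. Qed.

Lemma U_B : exists C d, 0 <= C /\ 0 < d /\ forall a, (a < n)%nat -> forall s x, Rabs s < d -> Rabs x <= Mv P ->
  Rabs (phi (tt P a) (ybar a + s) x - phi (tt P a) (ybar a) x) <= C * Rabs s.
Proof.
  set (Q := fun a C => exists d, 0 < d /\ forall s x, Rabs s < d -> Rabs x <= Mv P ->
     Rabs (phi (tt P a) (ybar a + s) x - phi (tt P a) (ybar a) x) <= C * Rabs s).
  assert (H1 : forall a, (a < n)%nat -> exists C, Q a C).
  { intros a Ha. destruct (hyp_link P HP a Ha) as [Ht _].
    destruct (Bphi (tt P a) Ht (ybar a) (Mv P) (Mv_nonneg P)) as [C [d [HC [Hd H]]]].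
    exists C, d. auto. }
  assert (H2 : forall a C C', C <= C' -> Q a C -> Q a C').
  { intros a C C' HCC [d [Hd H]]. exists d. split; auto. intros s x Hs Hx. specialize (H s x Hs Hx).
    assert (0 <= Rabs s) by apply Rabs_pos. nra. }
  destruct (all_bound n Q H1 H2) as [C HC].
  set (Q' := fun a d => forall s x, Rabs s < d -> Rabs x <= Mv P ->
     Rabs (phi (tt P a) (ybar a + s) x - phi (tt P a) (ybar a) x) <= Rmax C 0 * Rabs s).
  assert (H3 : forall a, (a < n)%nat -> exists d, 0 < d /\ Q' a d).
  { intros a Ha. destruct (HC a Ha) as [d [Hd H]]. exists d. split; auto. intros s x Hs Hx.
    specialize (H s x Hs Hx). assert (0 <= Rabs s) by apply Rabs_pos. assert (C <= Rmax C 0) by apply Rmax_l. nra. }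
  assert (H4 : forall a d d', 0 < d' <= d -> Q' a d -> Q' a d').
  { intros a d d' Hdd H s x Hs Hx. apply H; auto. lra. }
  destruct (all_pos n Q' H3 H4) as [d [Hd H]].
  exists (Rmax C 0), d. split; [apply Rmax_r|split; auto]. Qed.

Lemma U_E e : 0 < e -> exists d, 0 < d /\ forall a, (a < n)%nat -> forall s x, Rabs s < d -> 0 <= x <= Mv P ->
  Rabs (x - Lb a) < d -> Rabs (phi (tt P a) (ybar a + s) x - phi (tt P a) (ybar a) x - s * Dgb a) <= e * Rabs s.
Proof. intros He. apply all_pos.
  - intros a Ha. destruct (hyp_link P HP a Ha) as [Ht _].
    destruct (Lf_spec P HP v0 Hv0 ybar Hyb a Ha) as [HL _].
    apply (Ephi (tt P a) Ht (ybar a) (Mv P) (Lb a) e HL He).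
  - intros a d d' Hdd H s x Hs Hx Hxl. apply H; auto; lra. Qed.

Lemma fdiff_eq d l v : fobj P (fun b => ybar b + l * d b) v - fobj P ybar v =
  sumR n (fun a => phi (tt P a) (ybar a + l * d a) (v a) - phi (tt P a) (ybar a) (v a)).
Proof. unfold fobj. rewrite <- sumR_minus. reflexivity. Qed.

Lemma VB d l C eta : 0 <= C -> (forall a, (a < n)%nat -> forall s x, Rabs s < eta -> Rabs x <= Mv P ->
  Rabs (phi (tt P a) (ybar a + s) x - phi (tt P a) (ybar a) x) <= C * Rabs s) ->
  Rabs l * (sumR n (fun a => Rabs (d a)) + 1) < eta -> forall v, Vset P v ->
  Rabs (fobj P (fun b => ybar b + l * d b) v - fobj P ybar v) <= C * Rabs l * sumR n (fun a => Rabs (d a)).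
Proof. intros HC H Hl v Hv. rewrite fdiff_eq. eapply Rle_trans; [apply sumR_abs|].
  rewrite Rmult_assoc, <- !sumR_scal. apply sumR_le. intros a Ha.
  assert (Hda : Rabs (d a) <= sumR n (fun a => Rabs (d a))).
  { apply (term_le_sumR n (fun a => Rabs (d a))); auto. intros; apply Rabs_pos. }
  assert (0 <= Rabs l) by apply Rabs_pos.
  eapply Rle_trans. apply H; auto. rewrite Rabs_mult. nra.
  destruct (Vset_bound P v HP Hv a Ha). rewrite Rabs_pos_eq; lra.
  rewrite Rabs_mult. lra. Qed.

Lemma VE d l e eta : (forall a, (a < n)%nat -> forall s x, Rabs s < eta -> 0 <= x <= Mv P ->
  Rabs (x - Lb a) < eta -> Rabs (phi (tt P a) (ybar a + s) x - phi (tt P a) (ybar a) x - s * Dgb a) <= e * Rabs s) ->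
  Rabs l * (sumR n (fun a => Rabs (d a)) + 1) < eta -> forall v, Vset P v -> (forall a, (a < n)%nat -> Rabs (v a - Lb a) < eta) ->
  Rabs (fobj P (fun b => ybar b + l * d b) v - fobj P ybar v - l * sumR n (fun a => Dgb a * d a))
   <= e * Rabs l * sumR n (fun a => Rabs (d a)).
Proof. intros H Hl v Hv Hc. rewrite fdiff_eq, <- sumR_scal, <- sumR_minus.
  eapply Rle_trans; [apply sumR_abs|].
  rewrite Rmult_assoc, <- !sumR_scal. apply sumR_le. intros a Ha.
  assert (Hda : Rabs (d a) <= sumR n (fun a => Rabs (d a))).
  { apply (term_le_sumR n (fun a => Rabs (d a))); auto. intros; apply Rabs_pos. }
  assert (0 <= Rabs l) by apply Rabs_pos.
  replace (l * (Dgb a * d a)) with ((l * d a) * Dgb a) by ring.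
  eapply Rle_trans. apply H; auto. rewrite Rabs_mult. nra.
  apply (Vset_bound P v HP Hv a Ha).
  rewrite Rabs_mult. lra. Qed.

End Inst3.

Lemma lt_div a b K : 0 < K -> a < b / K -> a * K < b.
Proof. intros HK H. apply (Rmult_lt_compat_r K) in H; auto. unfold Rdiv in H.
  rewrite Rmult_assoc, Rinv_l in H; lra. Qed.

Section Inst4.
Variable P : instance.
Hypothesis HP : standing_assumptions P.
Variable v0 : vec.
Hypothesis Hv0 : Vset P v0.
Notation n := (nL P).
Variable ybar : vec.
Hypothesis Hyb : Boxy P ybar.

Notation Dgb := (Dg P ybar).

Lemma G3 d e : 0 < e -> exists eta, 0 < eta /\ forall l, l <> 0 -> Rabs l < eta ->
  Rabs (gval P (fun b => ybar b + l * d b) - gval P ybar - l * sumR n (fun a => Dgb a * d a)) <= e * Rabs l.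
Proof. intros He.
  set (Sd := sumR n (fun a => Rabs (d a))).
  assert (HSd : 0 <= Sd) by (apply sumR_nonneg; intros; apply Rabs_pos).
  set (K := Sd + 1).
  set (eE := e / (2 * K)).
  assert (HeE : 0 < eE) by (unfold eE, K; apply Rdiv_lt_0_compat; lra).
  destruct (U_E P HP v0 Hv0 ybar Hyb eE HeE) as [etaE [HetaE HE]].
  destruct (U_Q P HP v0 Hv0 ybar Hyb etaE HetaE) as [dQ [HdQ HQ]].
  destruct (U_B P HP ybar) as [C [etaB [HC [HetaB HB]]]].
  set (eta := Rmin (Rmin (etaB / K) (etaE / K)) (Rmin (dQ / (2 * (C * K + 1))) (Rmin (e / 2) 1))).
  assert (HK : 0 < K) by (unfold K; lra).
  assert (Heta : 0 < eta).
  { unfold eta. repeat apply Rmin_pos; try apply Rdiv_lt_0_compat; try lra.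
    assert (0 <= C * K) by (apply Rmult_le_pos; lra). lra. }
  exists eta. split; auto. intros l Hl0 Hl.
  set (S := sumR n (fun a => Dgb a * d a)).
  set (yl := fun b => ybar b + l * d b).
  set (al := Rabs l).
  assert (Hal : 0 < al) by (unfold al; apply Rabs_pos_lt; auto).
  assert (E1 : al < etaB / K) by (apply Rlt_le_trans with eta; auto; unfold eta; eapply Rle_trans; apply Rmin_l).
  assert (E2 : al < etaE / K) by (apply Rlt_le_trans with eta; auto; unfold eta; eapply Rle_trans; [apply Rmin_l|apply Rmin_r]).
  assert (E3 : al < dQ / (2 * (C * K + 1))) by (apply Rlt_le_trans with eta; auto; unfold eta; eapply Rle_trans; [apply Rmin_r|apply Rmin_l]).
  assert (E4 : al <= e / 2) by (left; apply Rlt_le_trans with eta; auto; unfold eta; eapply Rle_trans; [apply Rmin_r|]; eapply Rle_trans; [apply Rmin_r|apply Rmin_l]).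
  assert (E5 : al < 1) by (apply Rlt_le_trans with eta; auto; unfold eta; eapply Rle_trans; [apply Rmin_r|]; eapply Rle_trans; apply Rmin_r).
  assert (F1 : al * K < etaB) by (apply lt_div; auto).
  assert (F2 : al * K < etaE) by (apply lt_div; auto).
  assert (F3 : al * (2 * (C * K + 1)) < dQ).
  { assert (0 < 2 * (C * K + 1)) by (assert (0 <= C * K) by (apply Rmult_le_pos; lra); lra).
    apply lt_div; auto. }
  set (l2 := l * l).
  assert (Hl2 : l2 = al * al) by (unfold l2, al; rewrite <- Rabs_mult; rewrite Rabs_pos_eq; [auto|nra]).
  assert (Hl2p : 0 < l2) by (rewrite Hl2; nra).
  assert (Hl2a : l2 <= al) by (rewrite Hl2; nra).
  assert (VBl : forall v, Vset P v -> Rabs (fobj P yl v - fobj P ybar v) <= C * al * Sd).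
  { intros v Hv. apply (VB P HP ybar d l C etaB); auto. }
  assert (VEl : forall v, Vset P v -> (forall a, (a < n)%nat -> Rabs (v a - Lf P ybar a) < etaE) ->
     Rabs (fobj P yl v - fobj P ybar v - l * S) <= eE * al * Sd).
  { intros v Hv Hc. apply (VE P HP ybar d l eE etaE); auto. }
  assert (HCS : 0 <= C * al * Sd) by (apply Rmult_le_pos; [apply Rmult_le_pos|]; lra).
  assert (HES : eE * al * Sd <= e / 2 * al).
  { unfold eE. replace (e / (2 * K) * al * Sd) with ((e / 2 * al) * (Sd / K)) by (field; lra).
    assert (Sd / K <= 1) by (apply Rmult_le_reg_r with K; [lra|]; field_simplify; unfold K; lra).
    assert (0 <= e / 2 * al) by nra. nra. }
  assert (HD : 2 * l2 + 2 * (C * al * Sd) < dQ).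
  { assert (C * Sd <= C * K) by (apply Rmult_le_compat_l; unfold K; lra).
    assert (al * (C * Sd) <= al * (C * K)) by (apply Rmult_le_compat_l; lra). nra. }
  destruct (gval_approx P HP v0 Hv0 ybar l2 Hl2p) as [u [Hu Hfu]].
  assert (Huc : forall a, (a < n)%nat -> Rabs (u a - Lf P ybar a) < etaE).
  { apply HQ. split; auto. lra. }
  assert (Hg1 := gval_le P HP v0 Hv0 yl u Hu).
  assert (Hu1 := VEl u Hu Huc). assert (Hu2 := VBl u Hu).
  apply Rabs_le_between in Hu1. apply Rabs_le_between in Hu2.
  destruct (gval_approx P HP v0 Hv0 yl l2 Hl2p) as [v [Hv Hfv]].
  assert (Hv2 := VBl v Hv). apply Rabs_le_between in Hv2.
  assert (Hvc : forall a, (a < n)%nat -> Rabs (v a - Lf P ybar a) < etaE).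
  { apply HQ. split; auto. lra. }
  assert (Hv1 := VEl v Hv Hvc). apply Rabs_le_between in Hv1.
  assert (Hgv := gval_le P HP v0 Hv0 ybar v Hv).
  assert (Hl2e : l2 <= e / 2 * al) by (rewrite Hl2; apply Rmult_le_compat_r; lra).
  apply Rabs_le_between. fold yl S al. lra. Qed.

Lemma G4 a : (a < n)%nat -> gradg P ybar a = Dgb a.
Proof. intros Ha. unfold gradg. apply is_derive_unique. apply is_derive_Reals.
  set (d := fun b => if Nat.eqb b a then 1 else 0).
  intros e He. destruct (G3 d (e / 2)) as [eta [Heta H]]; [lra|].
  exists (mkposreal eta Heta). intros h Hh0 Hh. simpl in Hh.
  specialize (H h Hh0 Hh).
  rewrite (gval_ext P (fun b => if Nat.eqb b a then ybar b + (0 + h) else ybar b) (fun b => ybar b + h * d b)).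
  rewrite (gval_ext P (fun b => if Nat.eqb b a then ybar b + 0 else ybar b) ybar).
  2: { intros b Hb. destruct (Nat.eqb b a); ring. }
  2: { intros b Hb. unfold d. destruct (Nat.eqb b a); ring. }
  assert (HS : sumR n (fun b => Dgb b * d b) = Dgb a) by (apply sumR_indic; auto).
  rewrite HS in H.
  replace ((gval P (fun b => ybar b + h * d b) - gval P ybar) / h - Dgb a)
    with ((gval P (fun b => ybar b + h * d b) - gval P ybar - h * Dgb a) / h) by (field; auto).
  unfold Rdiv. rewrite Rabs_mult, Rabs_inv. apply Rmult_lt_reg_r with (Rabs h). apply Rabs_pos_lt; auto.
  rewrite Rmult_assoc, Rinv_l. assert (0 < Rabs h) by (apply Rabs_pos_lt; auto). nra.
  apply Rabs_no_R0; auto. Qed.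

Lemma SG y : Boxy P y -> gval P ybar + sumR n (fun a => gradg P ybar a * (y a - ybar a)) <= gval P y.
Proof. intros Hy.
  rewrite (sumR_ext n _ (fun a => Dgb a * (y a - ybar a))) by (intros a Ha; rewrite G4; auto).
  set (d := fun b => y b - ybar b). set (S := sumR n (fun a => Dgb a * d a)).
  apply Rnot_lt_le. intros Hlt.
  change (sumR n (fun a => Dgb a * (y a - ybar a))) with S in Hlt.
  set (e := (gval P ybar + S - gval P y) / 2).
  assert (He : 0 < e) by (unfold e, S, d in *; lra).
  destruct (G3 d e He) as [eta [Heta H]].
  set (l := Rmin (eta / 2) 1).
  assert (Hl : 0 < l) by (unfold l; apply Rmin_pos; lra).
  assert (Hl1 : l <= 1) by apply Rmin_r.
  assert (Hleta : l < eta) by (unfold l; eapply Rle_lt_trans; [apply Rmin_l|lra]).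
  specialize (H l ltac:(lra) ltac:(rewrite Rabs_pos_eq; lra)).
  rewrite (Rabs_pos_eq l) in H by lra. apply Rabs_le_between in H.
  assert (Hc := gval_convex P HP v0 Hv0 y ybar l Hy Hyb ltac:(lra)).
  rewrite (gval_ext P (fun b => l * y b + (1 - l) * ybar b) (fun b => ybar b + l * d b)) in Hc
    by (intros b Hb; unfold d; ring).
  fold S in H. assert (l * (S - e - (gval P y - gval P ybar)) > 0) by (apply Rmult_lt_0_compat; unfold e; lra). lra. Qed.

End Inst4.

Lemma cont2_const c y v : cont2 (fun _ _ => c) y v.
Proof. intros e He. exists 1. split; [lra|]. intros. rewrite Rminus_diag_eq, Rabs_R0; auto. Qed.

Lemma cont2_fy f y v : continuity_pt f y -> cont2 (fun y _ => f y) y v.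
Proof. intros H e He. destruct (cont_pt_elim f y H e He) as [d [Hd H']]. exists d. split; auto. Qed.

Lemma cont2_fv f y v : continuity_pt f v -> cont2 (fun _ v => f v) y v.
Proof. intros H e He. destruct (cont_pt_elim f v H e He) as [d [Hd H']]. exists d. split; auto. Qed.

Lemma cont2_plus h1 h2 y v : cont2 h1 y v -> cont2 h2 y v -> cont2 (fun y v => h1 y v + h2 y v) y v.
Proof. intros H1 H2 e He. destruct (H1 (e/2)) as [d1 [Hd1 G1]]; [lra|]. destruct (H2 (e/2)) as [d2 [Hd2 G2]]; [lra|].
  exists (Rmin d1 d2). split; [apply Rmin_pos; auto|]. intros y' v' Hy Hv.
  assert (A := G1 y' v' (Rlt_le_trans _ _ _ Hy (Rmin_l _ _)) (Rlt_le_trans _ _ _ Hv (Rmin_l _ _))).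
  assert (B := G2 y' v' (Rlt_le_trans _ _ _ Hy (Rmin_r _ _)) (Rlt_le_trans _ _ _ Hv (Rmin_r _ _))).
  replace (h1 y' v' + h2 y' v' - (h1 y v + h2 y v)) with ((h1 y' v' - h1 y v) + (h2 y' v' - h2 y v)) by ring.
  eapply Rle_lt_trans; [apply Rabs_triang|]. lra. Qed.

Lemma cont2_mult h1 h2 y v : cont2 h1 y v -> cont2 h2 y v -> cont2 (fun y v => h1 y v * h2 y v) y v.
Proof. intros H1 H2 e He.
  set (A := Rabs (h1 y v)). set (B := Rabs (h2 y v)).
  assert (0 <= A) by apply Rabs_pos. assert (0 <= B) by apply Rabs_pos.
  set (eta := Rmin 1 (e / (3 * (A + B + 1)))).
  assert (Heta : 0 < eta) by (apply Rmin_pos; [lra|apply Rdiv_lt_0_compat; lra]).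
  assert (Heta1 : eta <= 1) by apply Rmin_l.
  assert (Heta2 : eta * (A + B + 1) <= e / 3).
  { apply Rle_trans with (e / (3 * (A + B + 1)) * (A + B + 1)). apply Rmult_le_compat_r; [lra|apply Rmin_r].
    right. field. lra. }
  destruct (H1 eta Heta) as [d1 [Hd1 G1]]. destruct (H2 eta Heta) as [d2 [Hd2 G2]].
  exists (Rmin d1 d2). split; [apply Rmin_pos; auto|]. intros y' v' Hy Hv.
  assert (X := G1 y' v' (Rlt_le_trans _ _ _ Hy (Rmin_l _ _)) (Rlt_le_trans _ _ _ Hv (Rmin_l _ _))).
  assert (Y := G2 y' v' (Rlt_le_trans _ _ _ Hy (Rmin_r _ _)) (Rlt_le_trans _ _ _ Hv (Rmin_r _ _))).
  replace (h1 y' v' * h2 y' v' - h1 y v * h2 y v) with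
    ((h1 y' v' - h1 y v) * (h2 y' v' - h2 y v) + (h1 y' v' - h1 y v) * h2 y v + h1 y v * (h2 y' v' - h2 y v)) by ring.
  eapply Rle_lt_trans; [apply Rabs_triang|]. eapply Rle_lt_trans; [apply Rplus_le_compat_r, Rabs_triang|].
  rewrite !Rabs_mult. fold A B.
  assert (0 <= Rabs (h1 y' v' - h1 y v)) by apply Rabs_pos. assert (0 <= Rabs (h2 y' v' - h2 y v)) by apply Rabs_pos.
  assert (Rabs (h1 y' v' - h1 y v) * Rabs (h2 y' v' - h2 y v) <= eta * eta) by (apply Rmult_le_compat; lra).
  assert (Rabs (h1 y' v' - h1 y v) * B <= eta * B) by (apply Rmult_le_compat_r; lra).
  assert (A * Rabs (h2 y' v' - h2 y v) <= A * eta) by (apply Rmult_le_compat_l; lra).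
  assert (eta * eta <= eta * 1) by (apply Rmult_le_compat_l; lra).
  nra. Qed.

Lemma sumR_const n c : sumR n (fun _ => c) = INR n * c.
Proof. induction n; simpl sumR. simpl; ring. rewrite IHn, S_INR. ring. Qed.

Lemma sum_cont n (K : nat -> R -> R -> R) (y v : vec) :
  (forall a, (a < n)%nat -> cont2 (K a) (y a) (v a)) ->
  forall e, 0 < e -> exists d, 0 < d /\ forall y' v', (forall a, (a < n)%nat -> Rabs (y' a - y a) < d /\ Rabs (v' a - v a) < d) ->
  Rabs (sumR n (fun a => K a (y' a) (v' a)) - sumR n (fun a => K a (y a) (v a))) < e.
Proof. intros H e He.
  set (e' := e / (INR n + 1)).
  assert (Hn : 0 <= INR n) by apply pos_INR.
  assert (He' : 0 < e') by (apply Rdiv_lt_0_compat; lra).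
  destruct (all_pos n (fun a d => forall y' v', Rabs (y' - y a) < d -> Rabs (v' - v a) < d -> Rabs (K a y' v' - K a (y a) (v a)) < e')) as [d [Hd Hall]].
  - intros a Ha. apply (H a Ha e' He').
  - intros a d d' Hdd G y' v' Hy Hv. apply G; lra.
  - exists d. split; auto. intros y' v' Hc. rewrite <- sumR_minus.
    eapply Rle_lt_trans; [apply sumR_abs|]. eapply Rle_lt_trans.
    apply (sumR_le n _ (fun _ => e')). intros a Ha. left. apply Hall; [auto|apply Hc; auto|apply Hc; auto].
    rewrite sumR_const. unfold e'. apply Rmult_lt_reg_r with (INR n + 1). lra.
    field_simplify; try lra. Qed.

Lemma cont2_minus h1 h2 y v : cont2 h1 y v -> cont2 h2 y v -> cont2 (fun y v => h1 y v - h2 y v) y v.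
Proof. intros H1 H2. apply (cont2_plus h1 (fun y v => - h2 y v)); auto.
  intros e He. destruct (H2 e He) as [d [Hd G]]. exists d. split; auto. intros y' v' Hy Hv.
  replace (- h2 y' v' - - h2 y v) with (- (h2 y' v' - h2 y v)) by ring. rewrite Rabs_Ropp. auto. Qed.

Definition closev (n : nat) (d : R) (y y' : vec) := forall a, (a < n)%nat -> Rabs (y' a - y a) < d.

Section Inst5.
Variable P : instance.
Hypothesis HP : standing_assumptions P.
Notation n := (nL P).

Definition Kpsi (rho beta : R) (yk vk : vec) (a : nat) (y v : R) : R :=
  (tt P a y v * v + eta P * GG P a y)
  + rho * (phi (tt P a) y v - gradg P yk a * (y - yk a))
  + rho * beta * ((y - yk a) * (y - yk a) + (v - vk a) * (v - vk a)).

Lemma Psi_decomp rho beta yk vk y v : Psi P rho beta yk vk y v =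
  sumR n (fun a => Kpsi rho beta yk vk a (y a) (v a)) - rho * gval P yk.
Proof. unfold Psi, Fobj, Phi, fobj, sqdist, Kpsi, phi.
  rewrite !sumR_plus, !sumR_scal, sumR_minus, !sumR_plus.
  replace (sumR (nL P) (fun a => (y a - yk a) * (y a - yk a))) with (sumR (nL P) (fun a => (y a - yk a) ^ 2))
    by (apply sumR_ext; intros; ring).
  replace (sumR (nL P) (fun a => (v a - vk a) * (v a - vk a))) with (sumR (nL P) (fun a => (v a - vk a) ^ 2))
    by (apply sumR_ext; intros; ring).
  ring. Qed.

Lemma Kpsi_cont rho beta yk vk a y v : (a < n)%nat -> cont2 (Kpsi rho beta yk vk a) y v.
Proof. intros Ha. destruct (hyp_link P HP a Ha) as [Ht [_ [_ [_ [_ [HG _]]]]]].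
  unfold Kpsi.
  assert (HGc : forall y, continuity_pt (GG P a) y) by (intros; apply ex_derive_cont_pt; apply HG).
  Ltac c2 Ht HGc := first [ apply cont2_const
    | apply cont2_plus; [c2 Ht HGc|c2 Ht HGc] | apply cont2_minus; [c2 Ht HGc|c2 Ht HGc]
    | apply cont2_mult; [c2 Ht HGc|c2 Ht HGc]
    | apply (t_cont2 _ Ht) | apply (phi_cont2 _ Ht)
    | apply cont2_fv; apply continuity_pt_id | apply cont2_fy; apply continuity_pt_id
    | apply cont2_fy; apply HGc ].
  c2 Ht HGc.
Qed.

Lemma Psi_cont rho beta yk vk y v : forall e, 0 < e -> exists d, 0 < d /\ forall y' v',
  closev n d y y' -> closev n d v v' ->
  Rabs (Psi P rho beta yk vk y' v' - Psi P rho beta yk vk y v) < e.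
Proof. intros e He.
  destruct (sum_cont n (Kpsi rho beta yk vk) y v) with (e := e) as [d [Hd H]]; auto.
  intros a Ha. apply Kpsi_cont; auto.
  exists d. split; auto. intros y' v' Hy Hv. rewrite !Psi_decomp.
  replace (sumR n (fun a => Kpsi rho beta yk vk a (y' a) (v' a)) - rho * gval P yk -
     (sumR n (fun a => Kpsi rho beta yk vk a (y a) (v a)) - rho * gval P yk)) with
    (sumR n (fun a => Kpsi rho beta yk vk a (y' a) (v' a)) - sumR n (fun a => Kpsi rho beta yk vk a (y a) (v a))) by ring.
  apply H. intros a Ha. split; [apply Hy|apply Hv]; auto. Qed.

Lemma fobj_cont y v : forall e, 0 < e -> exists d, 0 < d /\ forall v',
  closev n d v v' -> Rabs (fobj P y v' - fobj P y v) < e.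
Proof. intros e He.
  destruct (sum_cont n (fun a => phi (tt P a)) y v) with (e := e) as [d [Hd H]]; auto.
  intros a Ha. destruct (hyp_link P HP a Ha) as [Ht _]. apply phi_cont2; auto.
  exists d. split; auto. intros v' Hv. apply (H y v'). intros a Ha. split; [|apply Hv; auto].
  rewrite Rminus_diag_eq, Rabs_R0; auto. Qed.

Definition Ucl (y : vec) := forall e, 0 < e -> exists y', Ups P y' /\ closev n e y y'.
Definition Vcl (v : vec) := forall e, 0 < e -> exists v', Vset P v' /\ closev n e v v'.

Lemma Ups_Ucl y : Ups P y -> Ucl y.
Proof. intros H e He. exists y. split; auto. intros a Ha. rewrite Rminus_diag_eq, Rabs_R0; auto. Qed.
Lemma Vset_Vcl v : Vset P v -> Vcl v.
Proof. intros H e He. exists v. split; auto. intros a Ha. rewrite Rminus_diag_eq, Rabs_R0; auto. Qed.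

Lemma Ucl_Boxy y : Ucl y -> Boxy P y.
Proof. intros H a Ha. split.
  - apply Rnot_lt_le. intros Hlt. destruct (H (- y a)) as [y' [[Hy' _] Hc]]; [lra|].
    specialize (Hc a Ha). specialize (Hy' a Ha). apply Rabs_lt_between' in Hc. lra.
  - apply Rnot_lt_le. intros Hlt. destruct (H (y a - cap P a)) as [y' [[Hy' _] Hc]]; [lra|].
    specialize (Hc a Ha). specialize (Hy' a Ha). apply Rabs_lt_between' in Hc. lra. Qed.

Lemma Vcl_bound v : Vcl v -> forall a, (a < n)%nat -> 0 <= v a <= Mv P.
Proof. intros H a Ha. split.
  - apply Rnot_lt_le. intros Hlt. destruct (H (- v a)) as [v' [Hv' Hc]]; [lra|].
    specialize (Hc a Ha). destruct (Vset_bound P v' HP Hv' a Ha). apply Rabs_lt_between' in Hc. lra.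
  - apply Rnot_lt_le. intros Hlt. destruct (H (v a - Mv P)) as [v' [Hv' Hc]]; [lra|].
    specialize (Hc a Ha). destruct (Vset_bound P v' HP Hv' a Ha). apply Rabs_lt_between' in Hc. lra. Qed.

Lemma Psi_cl_le rho beta yk vk y v B :
  (forall d, 0 < d -> exists y' v', closev n d y y' /\ closev n d v v' /\ Psi P rho beta yk vk y' v' <= B) ->
  Psi P rho beta yk vk y v <= B.
Proof. intros H. apply Rnot_lt_le. intros Hlt.
  destruct (Psi_cont rho beta yk vk y v (Psi P rho beta yk vk y v - B)) as [d [Hd G]]; [lra|].
  destruct (H d Hd) as [y' [v' [Hy [Hv HB]]]]. specialize (G y' v' Hy Hv).
  apply Rabs_lt_between' in G. lra. Qed.

Lemma Psi_cl_ge rho beta yk vk y v B :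
  (forall d, 0 < d -> exists y' v', closev n d y y' /\ closev n d v v' /\ B <= Psi P rho beta yk vk y' v') ->
  B <= Psi P rho beta yk vk y v.
Proof. intros H. apply Rnot_lt_le. intros Hlt.
  destruct (Psi_cont rho beta yk vk y v (B - Psi P rho beta yk vk y v)) as [d [Hd G]]; [lra|].
  destruct (H d Hd) as [y' [v' [Hy [Hv HB]]]]. specialize (G y' v' Hy Hv).
  apply Rabs_lt_between' in G. lra. Qed.

Lemma closev_refl d y : 0 < d -> closev n d y y.
Proof. intros Hd a Ha. rewrite Rminus_diag_eq, Rabs_R0; auto. Qed.

Lemma closev_sym d y y' : closev n d y y' -> closev n d y' y.
Proof. intros H a Ha. rewrite Rabs_minus_sym. apply H; auto. Qed.

Lemma gval_le_cl v0 (Hv0 : Vset P v0) y v : Vcl v -> gval P y <= fobj P y v.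
Proof. intros H. apply Rnot_lt_le. intros Hlt.
  destruct (fobj_cont y v (gval P y - fobj P y v)) as [d [Hd G]]; [lra|].
  destruct (H d Hd) as [v' [Hv' Hc]]. specialize (G v' Hc).
  assert (gval P y <= fobj P y v') by (apply (gval_le P HP v0 Hv0); auto).
  apply Rabs_lt_between' in G. lra. Qed.

Lemma Fobj_bound : exists C, forall y v, Boxy P y -> (forall a, (a < n)%nat -> 0 <= v a <= Mv P) ->
  Rabs (Fobj P y v) <= C.
Proof.
  assert (H1 : forall a, (a < n)%nat -> exists C, (fun a C => forall y v, 0 <= y <= cap P a -> 0 <= v <= Mv P ->
     Rabs (tt P a y v * v + eta P * GG P a y) <= C) a C).
  { intros a Ha. destruct (hyp_link P HP a Ha) as [Ht [Hm [_ [_ [HG0 [_ [HGm _]]]]]]].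
    destruct (t_rect_bound (tt P a) Ht Hm (cap P a) (Mv P)) as [T HT].
    destruct HP as [_ [_ [_ [_ [_ [Heta _]]]]]].
    exists (T * Mv P + eta P * GG P a (cap P a)). intros y v Hy Hv.
    eapply Rle_trans; [apply Rabs_triang|]. rewrite !Rabs_mult.
    specialize (HT y v Hy Hv). assert (0 <= Rabs (tt P a y v)) by apply Rabs_pos.
    assert (Rabs v <= Mv P) by (rewrite Rabs_pos_eq; lra).
    assert (Rabs (tt P a y v) * Rabs v <= T * Mv P) by (apply Rmult_le_compat; auto; apply Rabs_pos).
    assert (0 <= GG P a y) by (apply HG0; lra).
    assert (GG P a y <= GG P a (cap P a)).
    { destruct (Req_dec y (cap P a)) as [->|]; [lra|]. left; apply HGm; lra. }
    rewrite (Rabs_pos_eq (eta P)) by lra. rewrite (Rabs_pos_eq (GG P a y)) by lra.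
    assert (eta P * GG P a y <= eta P * GG P a (cap P a)) by (apply Rmult_le_compat_l; lra). lra. }
  assert (H2 : forall a C C', C <= C' -> (fun a C => forall y v, 0 <= y <= cap P a -> 0 <= v <= Mv P ->
     Rabs (tt P a y v * v + eta P * GG P a y) <= C) a C -> (fun a C => forall y v, 0 <= y <= cap P a -> 0 <= v <= Mv P ->
     Rabs (tt P a y v * v + eta P * GG P a y) <= C) a C').
  { intros a C C' HC G y v Hy Hv. specialize (G y v Hy Hv). lra. }
  destruct (all_bound n _ H1 H2) as [C HC].
  exists (sumR n (fun _ => C)). intros y v Hy Hv. unfold Fobj.
  rewrite <- sumR_scal, <- sumR_plus. eapply Rle_trans; [apply sumR_abs|].
  apply sumR_le. intros a Ha. apply HC; auto. Qed.

End Inst5.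

Lemma sq_close n x x' d : 0 < d -> sqdist n x x' < d * d -> closev n d x' x.
Proof. intros Hd H a Ha. assert (Hc := sqdist_coord n x x' a Ha).
  apply Rnot_le_lt. intros Hge.
  assert (Hm : d * d <= Rabs (x a - x' a) * Rabs (x a - x' a)) by (apply Rmult_le_compat; lra).
  rewrite <- Rabs_mult in Hm. rewrite (Rabs_pos_eq ((x a - x' a) * (x a - x' a))) in Hm
    by apply Rle_0_sqr.
  replace ((x a - x' a) ^ 2) with ((x a - x' a) * (x a - x' a)) in Hc by ring. lra. Qed.

Section Inst6.
Variable P : instance.
Hypothesis HP : standing_assumptions P.
Notation n := (nL P).

Lemma ext_v rho beta yk vk y X : (forall v', Vset P v' -> X <= Psi P rho beta yk vk y v') ->
  forall v, Vcl P v -> X <= Psi P rho beta yk vk y v.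
Proof. intros H v Hv. apply Psi_cl_ge; auto. intros d Hd. destruct (Hv d Hd) as [v' [Hv' Hc]].
  exists y, v'. split; [apply closev_refl; auto|split; auto]. Qed.

Lemma ext_y rho beta yk vk v X : (forall y', Ups P y' -> X <= Psi P rho beta yk vk y' v) ->
  forall y, Ucl P y -> X <= Psi P rho beta yk vk y v.
Proof. intros H y Hy. apply Psi_cl_ge; auto. intros d Hd. destruct (Hy d Hd) as [y' [Hy' Hc]].
  exists y', v. split; auto. split; [apply closev_refl; auto|auto]. Qed.

Lemma AL rho beta yk vk yo vo : AMA_out P rho beta yk vk yk yo vo -> Ucl P yk ->
  Ucl P yo /\ Vcl P vo /\ forall v, Vcl P v -> Psi P rho beta yk vk yo vo <= Psi P rho beta yk vk yk v.
Proof. intros [Y [Vs [HY0 [Hstep Hout]]]] Hyk.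
  set (Ps := Psi P rho beta yk vk).
  set (noprior := fun j => forall i, (i < j)%nat -> ~ partial_opt P rho beta yk vk (Y (S i)) (Vs (S i))).
  set (B := Ps yk (Vs 1%nat)).
  assert (H0 := Hstep O ltac:(intros; lia)). destruct H0 as [[HV1 Hopt1] [HU1 HoptY1]].
  rewrite HY0 in Hopt1.
  assert (HB : forall v, Vcl P v -> B <= Ps yk v).
  { apply ext_v. intros v' Hv'. apply Hopt1; auto. }
  assert (Hdesc : forall j, noprior j -> Ps (Y (S j)) (Vs (S j)) <= B /\ Ups P (Y (S j)) /\ Vset P (Vs (S j))).
  { induction j; intros Hnp.
    - split; [|split; auto]. unfold B, Ps. rewrite <- HY0 at 2.
      assert (Hx := ext_y rho beta yk vk (Vs 1%nat) (Psi P rho beta yk vk (Y 1%nat) (Vs 1%nat)) HoptY1 yk Hyk).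
      rewrite HY0. auto.
    - assert (Hnp' : noprior j) by (intros i Hi; apply Hnp; lia).
      destruct (IHj Hnp') as [Hle [HUj HVj]].
      destruct (Hstep (S j) Hnp) as [[HVs Hos] [HUs HoYs]].
      split; [|split; auto].
      assert (Ps (Y (S j)) (Vs (S (S j))) <= Ps (Y (S j)) (Vs (S j))) by (apply Hos; auto).
      assert (Ps (Y (S (S j))) (Vs (S (S j))) <= Ps (Y (S j)) (Vs (S (S j)))) by (apply HoYs; auto).
      unfold Ps in *. lra. }
  destruct Hout as [[j [Hnp [Hpo [-> ->]]]] | [Hall Hacc]].
  - destruct (Hdesc j Hnp) as [Hle [HU HV]].
    split; [apply Ups_Ucl; auto|split; [apply Vset_Vcl; auto|]].
    intros v Hv. specialize (HB v Hv). unfold Ps in *. lra.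
  - assert (Hnp : forall j, noprior j) by (intros j i _; apply Hall).
    assert (Hacc' : forall d, 0 < d -> exists j, closev n d yo (Y (S j)) /\ closev n d vo (Vs (S j))).
    { intros d Hd. destruct (Hacc (Rmin (d * d) (d * d)) ltac:(rewrite Rmin_left by lra; nra) 1%nat) as [j [Hj Hs]].
      destruct j as [|j]; [lia|]. exists j. rewrite Rmin_left in Hs by lra.
      assert (0 <= sqdist n (Y (S j)) yo) by apply sqdist_nonneg.
      assert (0 <= sqdist n (Vs (S j)) vo) by apply sqdist_nonneg.
      split; apply sq_close; auto; lra. }
    split; [|split].
    + intros d Hd. destruct (Hacc' d Hd) as [j [Hc _]]. exists (Y (S j)). split; auto. apply Hdesc; auto.
    + intros d Hd. destruct (Hacc' d Hd) as [j [_ Hc]]. exists (Vs (S j)). split; auto. apply Hdesc; auto.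
    + intros v Hv. assert (Hle : Ps yo vo <= B).
      { apply Psi_cl_le; auto. intros d Hd. destruct (Hacc' d Hd) as [j [Hc1 Hc2]].
        exists (Y (S j)), (Vs (S j)). split; auto. split; auto. apply Hdesc; auto. }
      specialize (HB v Hv). unfold Ps in *. lra.
Qed.
End Inst6.

Lemma bernoulli s m : 1 < s -> 1 + INR m * (s - 1) <= s ^ m.
Proof. intros Hs. induction m. simpl; lra. rewrite S_INR. simpl.
  assert (1 <= s ^ m) by (apply pow_R1_Rle; lra). nra. Qed.

Lemma beta_prod thl thu r b : 0 < r -> thl / r <= b <= thu / r -> thl <= r * b <= thu.
Proof. intros Hr [H1 H2]. split.
  - apply (Rmult_le_compat_l r) in H1; [|lra]. unfold Rdiv in H1. rewrite <- Rmult_assoc, (Rmult_comm r thl), Rmult_assoc, Rinv_r in H1; lra.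
  - apply (Rmult_le_compat_l r) in H2; [|lra]. unfold Rdiv in H2. rewrite <- Rmult_assoc, (Rmult_comm r thu), Rmult_assoc, Rinv_r in H2; lra. Qed.

Lemma norm2_le n x x' e : 0 < e -> sqdist n x x' <= e * e -> norm2 n x x' <= e.
Proof. intros He H. unfold norm2. rewrite <- (sqrt_square e) by lra. apply sqrt_le_1_alt. auto. Qed.

Theorem proposition4p4 (P : instance) (HP : standing_assumptions P)
  (eps1 eps2 eps3 thl thu rho0 sigma : R) (y0 : vec)
  (He1 : 0 < eps1) (He2 : 0 < eps2) (He3 : 0 < eps3)
  (Hthl : 0 < thl) (Hth : thl < thu) (Hrho0 : 0 < rho0) (Hsigma : 1 < sigma)
  (Hy0 : Ups P y0)
  (ys vs : nat -> vec) (rho beta : nat -> R)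
  (Hrun : PDC_run P eps1 eps2 eps3 thl thu rho0 sigma y0 ys vs rho beta) :
  exists k : nat, PDC_stop P eps1 eps2 eps3 ys vs k.
Proof.
  destruct Hrun as [Hys0 [[Hv0 _] [Hr0 [Hb0 [HAMA Hrec]]]]].
  apply NNPP. intros Hno.
  assert (Hns : forall k, ~ PDC_stop P eps1 eps2 eps3 ys vs k) by (intros k Hk; apply Hno; exists k; auto).
  assert (HA : forall k, AMA_out P (rho k) (beta k) (ys k) (vs k) (ys k) (ys (S k)) (vs (S k)))
    by (intros k; apply HAMA; intros; apply Hns).
  assert (HR : forall k, rho (S k) = (if Rlt_dec eps3 (Phi P (ys (S k)) (vs (S k)) (ys k) (vs k))
                  then sigma * rho k else rho k) /\ thl / rho (S k) <= beta (S k) <= thu / rho (S k))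
    by (intros k; apply Hrec; intros; apply Hns).

  set (v0 := vs O).
  assert (Inv : forall k, Ucl P (ys k) /\ Vcl P (vs k) /\ 0 < rho k /\ thl <= rho k * beta k <= thu).
  { induction k.
    - split; [rewrite Hys0; apply Ups_Ucl; auto|split; [apply Vset_Vcl; auto|]].
      rewrite Hr0. split; auto. apply beta_prod; auto.
    - destruct IHk as [Hu [Hv [Hr Hb]]].
      destruct (AL P HP _ _ _ _ _ _ (HA k) Hu) as [Hu' [Hv' _]].
      destruct (HR k) as [Hrk Hbk].
      assert (Hr' : 0 < rho (S k)) by (rewrite Hrk; destruct (Rlt_dec _ _); nra).
      split; auto. split; auto. split; auto. apply beta_prod; auto. }
  assert (KI : forall k v, Vcl P v -> Psi P (rho k) (beta k) (ys k) (vs k) (ys (S k)) (vs (S k))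
                 <= Psi P (rho k) (beta k) (ys k) (vs k) (ys k) v).
  { intros k. destruct (Inv k) as [Hu _]. apply (AL P HP _ _ _ _ _ _ (HA k) Hu). }
  assert (Hmono : forall k, rho k <= rho (S k)).
  { intros k. destruct (HR k) as [Hrk _]. destruct (Inv k) as [_ [_ [Hr _]]]. rewrite Hrk.
    destruct (Rlt_dec _ _); nra. }
  assert (Hmono' : forall i j, (i <= j)%nat -> rho i <= rho j).
  { intros i j Hij. induction Hij; [lra|]. specialize (Hmono m). lra. }
  destruct (Fobj_bound P HP) as [CF HCF].
  assert (HCF' : forall y v, Ucl P y -> Vcl P v -> Rabs (Fobj P y v) <= CF).
  { intros y v Hy Hv. apply HCF. apply Ucl_Boxy; auto. apply Vcl_bound; auto. }
  set (Sv := sumR (nL P) (fun _ => Mv P * Mv P)).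
  assert (HSv : forall v v', Vcl P v -> Vcl P v' -> sqdist (nL P) v v' <= Sv).
  { intros v v' Hv Hv'. apply sumR_le. intros a Ha.
    destruct (Vcl_bound P HP v Hv a Ha). destruct (Vcl_bound P HP v' Hv' a Ha). nra. }
  assert (Hphi0 : forall k v, Phi P (ys k) v (ys k) (vs k) = fobj P (ys k) v - gval P (ys k)).
  { intros k v. unfold Phi. rewrite sumR_zero. ring. intros a Ha. ring. }
  destruct (classic (exists K, forall k, (K <= k)%nat -> ~ eps3 < Phi P (ys (S k)) (vs (S k)) (ys k) (vs k)))
    as [[K HK] | HnK].
  -
    assert (Hconst : forall k, (K <= k)%nat -> rho k = rho K).
    { intros k Hk. induction Hk; auto. destruct (HR m) as [Hrm _]. rewrite Hrm.
      destruct (Rlt_dec _ _) as [Hl|]; [exfalso; apply (HK m); auto|auto]. }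
    set (rK := rho K).
    set (L := fun k => Fobj P (ys k) (vs k) + rK * (fobj P (ys k) (vs k) - gval P (ys k))).
    set (mm := Rmin (eps1 * eps1) (eps2 * eps2)).
    assert (Hmm : 0 < mm) by (apply Rmin_pos; nra).
    assert (HrK : 0 < rK) by apply (Inv K).
    assert (Hdec : forall k, (K <= k)%nat -> L (S k) + thl * mm <= L k).
    { intros k Hk. destruct (Inv k) as [Hu [Hv [Hr Hb]]]. destruct (Inv (S k)) as [Hu' [Hv' _]].
      assert (Hrk : rho k = rK) by (apply Hconst; auto).
      assert (H1 := KI k (vs k) Hv). unfold Psi in H1. rewrite Hphi0, !sqdist_self in H1.
      assert (Hsg := SG P HP v0 Hv0 (ys k) (Ucl_Boxy P (ys k) Hu) (ys (S k)) (Ucl_Boxy P _ Hu')).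
      assert (Hstop : ~ (sqdist (nL P) (ys (S k)) (ys k) <= eps1 * eps1 /\ sqdist (nL P) (vs (S k)) (vs k) <= eps2 * eps2)).
      { intros [Hs1 Hs2]. apply (Hns k). split; [apply norm2_le; auto|split; [apply norm2_le; auto|]].
        apply Rnot_lt_le. apply HK; auto. }
      assert (HS : mm <= sqdist (nL P) (ys (S k)) (ys k) + sqdist (nL P) (vs (S k)) (vs k)).
      { assert (0 <= sqdist (nL P) (ys (S k)) (ys k)) by apply sqdist_nonneg.
        assert (0 <= sqdist (nL P) (vs (S k)) (vs k)) by apply sqdist_nonneg.
        destruct (Rle_dec (sqdist (nL P) (ys (S k)) (ys k)) (eps1 * eps1)).
        - destruct (Rle_dec (sqdist (nL P) (vs (S k)) (vs k)) (eps2 * eps2)). exfalso; tauto.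
          assert (mm <= eps2 * eps2) by apply Rmin_r. lra.
        - assert (mm <= eps1 * eps1) by apply Rmin_l. lra. }
      assert (Hprod : thl * mm <= rho k * beta k * (sqdist (nL P) (ys (S k)) (ys k) + sqdist (nL P) (vs (S k)) (vs k))).
      { apply Rmult_le_compat; lra. }
      unfold Phi in H1. unfold L. rewrite Hrk in H1, Hprod.
      assert (rK * (gval P (ys k) + sumR (nL P) (fun a => gradg P (ys k) a * (ys (S k) a - ys k a))) <= rK * gval P (ys (S k)))
        by (apply Rmult_le_compat_l; lra).
      lra. }
    assert (Hlow : forall k, - CF <= L k).
    { intros k. destruct (Inv k) as [Hu [Hv _]]. unfold L.
      assert (H1 := HCF' _ _ Hu Hv). apply Rabs_le_between in H1.
      assert (gval P (ys k) <= fobj P (ys k) (vs k)) by (apply (gval_le_cl P HP v0 Hv0); auto).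
      assert (0 <= rK * (fobj P (ys k) (vs k) - gval P (ys k))) by (apply Rmult_le_pos; lra). lra. }
    assert (Hit : forall j, L (K + j)%nat <= L K - INR j * (thl * mm)).
    { induction j. rewrite Nat.add_0_r. simpl. lra.
      assert (H := Hdec (K + j)%nat ltac:(lia)). rewrite Nat.add_succ_r, S_INR. lra. }
    destruct (INR_unbounded ((L K + CF) / (thl * mm))) as [j Hj].
    assert (Htm : 0 < thl * mm) by nra.
    specialize (Hit j). specialize (Hlow (K + j)%nat).
    assert (INR j * (thl * mm) > L K + CF).
    { apply (Rmult_lt_compat_r (thl * mm)) in Hj; auto. unfold Rdiv in Hj.
      rewrite Rmult_assoc, Rinv_l in Hj; lra. }
    lra.
  -
    assert (HnK' : forall K, exists k, (K <= k)%nat /\ eps3 < Phi P (ys (S k)) (vs (S k)) (ys k) (vs k)).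
    { intros K. apply NNPP. intros Hn. apply HnK. exists K. intros k Hk Hl. apply Hn. exists k; auto. }
    set (W := CF + 1 + thu * Sv + CF).
    assert (Hbound : forall k, eps3 < Phi P (ys (S k)) (vs (S k)) (ys k) (vs k) -> rho k * eps3 < W).
    { intros k Hk. destruct (Inv k) as [Hu [Hv [Hr Hb]]]. destruct (Inv (S k)) as [Hu' [Hv' _]].
      destruct (gval_approx P HP v0 Hv0 (ys k) (/ rho k)) as [v [HvV Hfv]].
      apply Rinv_0_lt_compat; auto.
      assert (Hvc : Vcl P v) by (apply Vset_Vcl; auto).
      assert (H1 := KI k v Hvc). unfold Psi in H1. rewrite Hphi0, sqdist_self in H1.
      assert (A1 := HCF' _ _ Hu' Hv'). assert (A2 := HCF' _ _ Hu Hvc).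
      apply Rabs_le_between in A1. apply Rabs_le_between in A2.
      assert (A3 : sqdist (nL P) v (vs k) <= Sv) by (apply HSv; auto).
      assert (A4 : rho k * (fobj P (ys k) v - gval P (ys k)) <= 1).
      { assert (rho k * (fobj P (ys k) v - gval P (ys k)) <= rho k * / rho k) by (apply Rmult_le_compat_l; lra).
        rewrite Rinv_r in H; lra. }
      assert (A5 : 0 <= sqdist (nL P) (ys (S k)) (ys k) + sqdist (nL P) (vs (S k)) (vs k))
        by (assert (0 <= sqdist (nL P) (ys (S k)) (ys k)) by apply sqdist_nonneg;
            assert (0 <= sqdist (nL P) (vs (S k)) (vs k)) by apply sqdist_nonneg; lra).
      assert (A6 : 0 <= rho k * beta k * (sqdist (nL P) (ys (S k)) (ys k) + sqdist (nL P) (vs (S k)) (vs k)))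
        by (apply Rmult_le_pos; lra).
      assert (A7 : rho k * beta k * (0 + sqdist (nL P) v (vs k)) <= thu * Sv).
      { assert (0 <= sqdist (nL P) v (vs k)) by apply sqdist_nonneg.
        rewrite Rplus_0_l. apply Rmult_le_compat; lra. }
      assert (A8 : rho k * eps3 < rho k * Phi P (ys (S k)) (vs (S k)) (ys k) (vs k)) by (apply Rmult_lt_compat_l; auto).
      unfold W. lra. }
    assert (Hgrow : forall m, exists k, eps3 < Phi P (ys (S k)) (vs (S k)) (ys k) (vs k) /\ rho0 * sigma ^ m <= rho k).
    { induction m.
      - destruct (HnK' O) as [k [_ Hk]]. exists k. split; auto. simpl. rewrite Rmult_1_r, <- Hr0. apply Hmono'; lia.
      - destruct IHm as [k [Hk Hrk]]. destruct (HnK' (S k)) as [k' [Hk' Hk'']]. exists k'. split; auto.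
        assert (rho (S k) <= rho k') by (apply Hmono'; auto).
        destruct (HR k) as [Hrs _]. rewrite Hrs in H. destruct (Rlt_dec _ _); [|contradiction].
        simpl. nra. }
    destruct (INR_unbounded (W / (rho0 * eps3) / (sigma - 1))) as [m Hm].
    destruct (Hgrow m) as [k [Hk Hrk]].
    specialize (Hbound k Hk). assert (Hb := bernoulli sigma m Hsigma).
    assert (Hp : 0 < rho0 * eps3) by nra.
    assert (INR m * (sigma - 1) > W / (rho0 * eps3)).
    { apply (Rmult_lt_compat_r (sigma - 1)) in Hm; [|lra]. unfold Rdiv in Hm at 1.
      rewrite Rmult_assoc, Rinv_l in Hm; lra. }
    assert (sigma ^ m * (rho0 * eps3) > W).
    { assert (W / (rho0 * eps3) * (rho0 * eps3) = W) by (field; lra).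
      assert (sigma ^ m > W / (rho0 * eps3)) by lra.
      apply (Rmult_lt_compat_r (rho0 * eps3)) in H1; auto. lra. }
    assert (rho0 * sigma ^ m * eps3 <= rho k * eps3) by (apply Rmult_le_compat_r; lra).
    lra.
Qed.
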